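(* In the setting described in the context, with all standing assumptions in force, for every $i\in\{1,\dots,N\}$, $$\lim_{t\to\infty}\big\|\hat{\mathbf x}_{(i,\ell_i^t)}(\mathbf x_{(i,:)}^t)-\tilde{\mathbf x}_{(i,\ell_i^t)}^t\big\|=0 .$$
   Context: Problem. Let $N,B,d\ge1$. A vector $\mathbf x\in\mathbb R^{dB}$ is partitioned into blocks $\mathbf x=(\mathbf x_1,\dots,\mathbf x_B)$ with $\mathbf x_\ell\in\mathbb R^d$, and $\nabla_\ell$ denotes the partial gradient with respect to block $\ell$. Problem (P) is $$\min_{\mathbf x}\ U(\mathbf x)=\sum_{i=1}^Nf_i(\mathbf x)+\sum_{\ell=1}^B r_\ell(\mathbf x_\ell)\quad\text{s.t. }\mathbf x_\ell\in\mathcal K_\ell,\ \ell=1,\dots,B,$$ with $\mathcal K=\mathcal K_1\times\dots\times\mathcal K_B$. Problem assumptions: - each $\mathcal K_\ell\subseteq\mathbb R^d$ is nonempty, closed and convex; - each $f_i:\mathbb R^{dB}\to\mathbb R$ is $C^1$ on an open set containing $\mathcal K$, and $\nabla f_i$ is $L_i$-Lipschitz continuous and bounded on $\mathcal K$; - each $r_\ell:\mathbb R^d\to\mathbb R$ is convex with bounded subgradients on $\mathcal K_\ell$; - $U$ is coercive on $\mathcal K$. Network. $\mathcal G=(\{1,\dots,N\},\mathcal E)$ is a fixed, strongly connected digraph containing all self-loops. The in-neighbor set of $i$ is $\mathcal N_i=\{j:(j,i)\in\mathcal E\}$. Block selection. At each iteration $t\ge0$, agent $i$ picks $\ell_i^t\in\{1,\dots,B\}$.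 For each $i$ there is a finite $T_i>0$ with $\bigcup_{\tau=0}^{T_i-1}\{\ell_i^{t+\tau}\}=\{1,\dots,B\}$ for all $t\ge0$. Define $\mathcal N_{i,\ell}^t=\{j\in\mathcal N_i:\ell_j^t=\ell\}\cup\{i\}$ and $\mathcal E_\ell^t=\{(j,i)\in\mathcal E:j\in\mathcal N_{i,\ell}^t\}$. Weights. For each $\ell$ and $t$, $A_\ell^t=[a_{ij\ell}^t]$ satisfies $a_{ij\ell}^t>\kappa$ if $(j,i)\in\mathcal E_\ell^t$, $a_{ij\ell}^t=0$ otherwise (for a fixed $\kappa>0$), and $\mathbf 1^\top A_\ell^t=\mathbf 1^\top$. Surrogates. For each $i,\ell$, $\tilde f_{i,\ell}:\mathcal K_\ell\times\mathcal K\to\mathbb R$ satisfies: - $\tilde f_{i,\ell}(\cdot;\mathbf x)$ is $C^1$ and $\tau_i$-strongly convex on $\mathcal K_\ell$ uniformly in $\mathbf x\in\mathcal K$, with $\tau_i>0$; - $\nabla\tilde f_{i,\ell}(\mathbf x_\ell;\mathbf x)=\nabla_\ell f_i(\mathbf x)$ for all $\mathbf x\in\mathcal K$, where $\nabla\tilde f_{i,\ell}$ is the gradient in the first argument and $\mathbf x_\ell$ is the $\ell$-th block of $\mathbf x$; - $\nabla\tilde f_{i,\ell}(\mathbf z;\cdot)$ is Lipschitz continuous on $\mathcal K$ uniformly in $\mathbf z\in\mathcal K_\ell$. For $\mathbf w\in\mathcal K$ and $\mathbf g\in\mathbb R^d$ let $$\hat f_{i,\ell}(\mathbf z;\mathbf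 w,\mathbf g)=\tilde f_{i,\ell}(\mathbf z;\mathbf w)+(N\mathbf g-\nabla_\ell f_i(\mathbf w))^\top(\mathbf z-\mathbf w_\ell).$$ Best-response map: for $\mathbf w\in\mathcal K$ define $$\hat{\mathbf x}_{(i,\ell)}(\mathbf w)=\arg\min_{\mathbf z\in\mathcal K_\ell}\ \hat f_{i,\ell}\Big(\mathbf z;\mathbf w,\tfrac1N\sum_{j=1}^N\nabla_\ell f_j(\mathbf w)\Big)+r_\ell(\mathbf z).$$ Step sizes. $0<\gamma^t\le1$, $\gamma^{t+1}\le\gamma^t$, $\sum_t\gamma^t=\infty$, $\sum_t(\gamma^t)^2<\infty$. Algorithm. Agent $i$ holds $\mathbf x_{(i,:)}^t=(\mathbf x_{(i,\ell)}^t)_\ell$, $\mathbf y_{(i,:)}^t=(\mathbf y_{(i,\ell)}^t)_\ell$ in $\mathbb R^{dB}$ and scalars $\phi_{(i,\ell)}^t$. Initialization: $\mathbf x_{(i,:)}^0\in\mathcal K$ arbitrary, $\mathbf y_{(i,:)}^0=\nabla f_i(\mathbf x_{(i,:)}^0)$, $\phi_{(i,\ell)}^0=1$. At iteration $t$, each agent $i$: - computes $\tilde{\mathbf x}_{(i,\ell_i^t)}^t=\arg\min_{\mathbf z\in\mathcal K_{\ell_i^t}}\hat f_{i,\ell_i^t}(\mathbf z;\mathbf x_{(i,:)}^t,\mathbf y_{(i,\ell_i^t)}^t)+r_{\ell_i^t}(\mathbf z)$; - sets $\Delta\mathbf x_{(i,\ell)}^t=\tilde{\mathbf x}_{(i,\ell)}^t-\mathbf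 x_{(i,\ell)}^t$ if $\ell=\ell_i^t$ and $\Delta\mathbf x_{(i,\ell)}^t=\mathbf 0$ otherwise; - for every $\ell$ updates $$\phi_{(i,\ell)}^{t+1}=\sum_{j\in\mathcal N_{i,\ell}^t}a_{ij\ell}^t\phi_{(j,\ell)}^t,\qquad \mathbf x_{(i,\ell)}^{t+1}=\sum_{j\in\mathcal N_{i,\ell}^t}\frac{a_{ij\ell}^t\phi_{(j,\ell)}^t}{\phi_{(i,\ell)}^{t+1}}\big(\mathbf x_{(j,\ell)}^t+\gamma^t\Delta\mathbf x_{(j,\ell)}^t\big),$$ $$\mathbf y_{(i,\ell)}^{t+1}=\sum_{j\in\mathcal N_{i,\ell}^t}\frac{a_{ij\ell}^t}{\phi_{(i,\ell)}^{t+1}}\Big(\phi_{(j,\ell)}^t\mathbf y_{(j,\ell)}^t+\nabla_\ell f_j(\mathbf x_{(j,:)}^{t+1})-\nabla_\ell f_j(\mathbf x_{(j,:)}^t)\Big).$$ *)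

(* Defs.v *)
From Stdlib Require Import Reals Lra Arith Relations.
Open Scope R_scope.

Definition Fin (n : nat) := {k : nat | (k < n)%nat}.
Definition fin_eqb {n : nat} (a b : Fin n) : bool := Nat.eqb (proj1_sig a) (proj1_sig b).

Fixpoint nsum (m : nat) (g : nat -> R) : R :=
  match m with O => 0 | S m' => nsum m' g + g m' end.

Definition fsum (n : nat) (f : Fin n -> R) : R :=
  nsum n (fun k => match lt_dec k n with left H => f (exist _ k H) | right _ => 0 end).

Definition Blk (d : nat) := Fin d -> R.
Definition Full (B d : nat) := Fin B -> Blk d.

Definition bzero (d : nat) : Blk d := fun _ => 0.
Definition badd {d} (u v : Blk d) : Blk d := fun k => u k + v k.
Definition bsub {d} (u v : Blk d) : Blk d := fun k => u k - v k.
Definition bscal {d} (c : R) (u : Blk d) : Blk d := fun k => c * u k.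
Definition bdot {d} (u v : Blk d) : R := fsum d (fun k => u k * v k).
Definition bnorm {d} (u : Blk d) : R := sqrt (bdot u u).
Definition bsumv {d} (n : nat) (f : Fin n -> Blk d) : Blk d := fun k => fsum n (fun j => f j k).

Definition fsub {B d} (x y : Full B d) : Full B d := fun l => bsub (x l) (y l).
Definition fdot {B d} (x y : Full B d) : R := fsum B (fun l => bdot (x l) (y l)).
Definition fnorm {B d} (x : Full B d) : R := sqrt (fdot x x).

Definition bOpen {d} (O : Blk d -> Prop) : Prop :=
  forall x, O x -> exists e, 0 < e /\ forall y, bnorm (bsub y x) < e -> O y.
Definition fOpen {B d} (O : Full B d -> Prop) : Prop :=
  forall x, O x -> exists e, 0 < e /\ forall y, fnorm (fsub y x) < e -> O y.
Definition bClosed {d} (S : Blk d -> Prop) : Prop :=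
  bOpen (fun x => ~ S x).
Definition bConvexSet {d} (S : Blk d -> Prop) : Prop :=
  forall u v th, S u -> S v -> 0 <= th <= 1 ->
    S (badd (bscal th u) (bscal (1 - th) v)).
Definition inK {B d} (K : Fin B -> Blk d -> Prop) (x : Full B d) : Prop :=
  forall l, K l (x l).

Definition fGradOn {B d} (O : Full B d -> Prop) (f : Full B d -> R) (g : Full B d -> Full B d) : Prop :=
  forall x, O x -> forall eps, 0 < eps -> exists delta, 0 < delta /\
    forall y, fnorm (fsub y x) < delta ->
      Rabs (f y - f x - fdot (g x) (fsub y x)) <= eps * fnorm (fsub y x).
Definition bGradOn {d} (O : Blk d -> Prop) (f : Blk d -> R) (g : Blk d -> Blk d) : Prop :=
  forall x, O x -> forall eps, 0 < eps -> exists delta, 0 < delta /\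
    forall y, bnorm (bsub y x) < delta ->
      Rabs (f y - f x - bdot (g x) (bsub y x)) <= eps * bnorm (bsub y x).
Definition fContOn {B d} (O : Full B d -> Prop) (g : Full B d -> Full B d) : Prop :=
  forall x, O x -> forall eps, 0 < eps -> exists delta, 0 < delta /\
    forall y, O y -> fnorm (fsub y x) < delta -> fnorm (fsub (g y) (g x)) < eps.
Definition bContOn {d} (O : Blk d -> Prop) (g : Blk d -> Blk d) : Prop :=
  forall x, O x -> forall eps, 0 < eps -> exists delta, 0 < delta /\
    forall y, O y -> bnorm (bsub y x) < delta -> bnorm (bsub (g y) (g x)) < eps.

Definition fC1Around {B d} (S : Full B d -> Prop) (f : Full B d -> R) (g : Full B d -> Full B d) : Prop :=
  exists O, fOpen O /\ (forall x, S x -> O x) /\ fGradOn O f g /\ fContOn O g.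
Definition bC1Around {d} (S : Blk d -> Prop) (f : Blk d -> R) (g : Blk d -> Blk d) : Prop :=
  exists O, bOpen O /\ (forall x, S x -> O x) /\ bGradOn O f g /\ bContOn O g.

Definition bConvexFun {d} (r : Blk d -> R) : Prop :=
  forall u v th, 0 <= th <= 1 ->
    r (badd (bscal th u) (bscal (1 - th) v)) <= th * r u + (1 - th) * r v.
Definition IsSubgrad {d} (r : Blk d -> R) (x g : Blk d) : Prop :=
  forall z, r z >= r x + bdot g (bsub z x).
Definition BoundedSubgradsOn {d} (S : Blk d -> Prop) (r : Blk d -> R) : Prop :=
  exists M, forall x g, S x -> IsSubgrad r x g -> bnorm g <= M.

Definition IsArgmin {d} (S : Blk d -> Prop) (F : Blk d -> R) (z : Blk d) : Prop :=
  S z /\ forall w, S w -> F z <= F w.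

Definition Uobj {N B d} (f : Fin N -> Full B d -> R) (r : Fin B -> Blk d -> R) (x : Full B d) : R :=
  fsum N (fun i => f i x) + fsum B (fun l => r l (x l)).

Definition CoerciveOn {B d} (S : Full B d -> Prop) (U : Full B d -> R) : Prop :=
  forall M, exists rho, forall x, S x -> fnorm x >= rho -> U x >= M.

Definition ProblemAssumptions {N B d : nat}
  (K : Fin B -> Blk d -> Prop) (f : Fin N -> Full B d -> R) (gf : Fin N -> Full B d -> Full B d)
  (L : Fin N -> R) (r : Fin B -> Blk d -> R) : Prop :=
  (forall l, (exists z, K l z) /\ bClosed (K l) /\ bConvexSet (K l)) /\
  (forall i, fC1Around (inK K) (f i) (gf i)
      /\ (forall x y, inK K x -> inK K y -> fnorm (fsub (gf i x) (gf i y)) <= L i * fnorm (fsub x y))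
      /\ (exists M, forall x, inK K x -> fnorm (gf i x) <= M)) /\
  (forall l, bConvexFun (r l) /\ BoundedSubgradsOn (K l) (r l)) /\
  CoerciveOn (inK K) (Uobj f r).

(** * Network: E j i = true means (j,i) is an edge, i.e. j is an in-neighbor of i *)
Definition NetworkAssumptions {N : nat} (E : Fin N -> Fin N -> bool) : Prop :=
  (forall i, E i i = true) /\
  (forall i j, clos_trans (Fin N) (fun a b => E a b = true) i j).

Definition BlockSelection {N B : nat} (ell : nat -> Fin N -> Fin B) : Prop :=
  forall i, exists T : nat, (0 < T)%nat /\
    forall t (l : Fin B), exists tau, (tau < T)%nat /\ ell (t + tau)%nat i = l.

Definition inNil {N B : nat} (E : Fin N -> Fin N -> bool) (ell : nat -> Fin N -> Fin B)
  (t : nat) (i : Fin N) (l : Fin B) (j : Fin N) : bool :=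
  (E j i && fin_eqb (ell t j) l) || fin_eqb j i.

Definition inEl {N B : nat} (E : Fin N -> Fin N -> bool) (ell : nat -> Fin N -> Fin B)
  (t : nat) (l : Fin B) (i j : Fin N) : bool :=
  E j i && inNil E ell t i l j.

(** a t l i j = a_{ij l}^t *)
Definition WeightAssumptions {N B : nat} (E : Fin N -> Fin N -> bool) (ell : nat -> Fin N -> Fin B)
  (kappa : R) (a : nat -> Fin B -> Fin N -> Fin N -> R) : Prop :=
  (forall t l i j, inEl E ell t l i j = true -> a t l i j > kappa) /\
  (forall t l i j, inEl E ell t l i j = false -> a t l i j = 0) /\
  (forall t l j, fsum N (fun i => a t l i j) = 1).

(** * Surrogates: ft i l z x = \tilde f_{i,l}(z; x), gft its gradient in z *)
Definition SurrogateAssumptions {N B d : nat} (K : Fin B -> Blk d -> Prop)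
  (gf : Fin N -> Full B d -> Full B d)
  (ft : Fin N -> Fin B -> Blk d -> Full B d -> R) (gft : Fin N -> Fin B -> Blk d -> Full B d -> Blk d)
  (tau : Fin N -> R) : Prop :=
  (forall i, 0 < tau i) /\
  (forall i l, forall x, inK K x ->
      bC1Around (K l) (fun z => ft i l z x) (fun z => gft i l z x)) /\
  (forall i l, forall x, inK K x -> forall z w, K l z -> K l w ->
      ft i l z x >= ft i l w x + bdot (gft i l w x) (bsub z w) + tau i / 2 * (bnorm (bsub z w)) ^ 2) /\
  (forall i l, forall x, inK K x -> gft i l (x l) x = gf i x l) /\
  (forall i l, exists Lt, forall z, K l z -> forall x y, inK K x -> inK K y ->
      bnorm (bsub (gft i l z x) (gft i l z y)) <= Lt * fnorm (fsub x y)).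

Definition fhat {N B d : nat} (gf : Fin N -> Full B d -> Full B d)
  (ft : Fin N -> Fin B -> Blk d -> Full B d -> R)
  (i : Fin N) (l : Fin B) (z : Blk d) (w : Full B d) (g : Blk d) : R :=
  ft i l z w + bdot (bsub (bscal (INR N) g) (gf i w l)) (bsub z (w l)).

Definition BRobj {N B d : nat} (gf : Fin N -> Full B d -> Full B d)
  (ft : Fin N -> Fin B -> Blk d -> Full B d -> R) (r : Fin B -> Blk d -> R)
  (i : Fin N) (l : Fin B) (w : Full B d) (z : Blk d) : R :=
  fhat gf ft i l z w (bscal (/ INR N) (bsumv N (fun j => gf j w l))) + r l z.

Definition StepSizes (gamma : nat -> R) : Prop :=
  (forall t, 0 < gamma t <= 1) /\
  (forall t, gamma (S t) <= gamma t) /\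
  cv_infty (fun n => sum_f_R0 gamma n) /\
  (exists s, Un_cv (fun n => sum_f_R0 (fun t => gamma t ^ 2) n) s).

Definition DeltaX {N B d : nat} (ell : nat -> Fin N -> Fin B) (x : nat -> Fin N -> Full B d)
  (xt : nat -> Fin N -> Blk d) (t : nat) (j : Fin N) (l : Fin B) : Blk d :=
  if fin_eqb l (ell t j) then bsub (xt t j) (x t j l) else bzero d.

(** * The algorithm: x t i, y t i are x_{(i,:)}^t, y_{(i,:)}^t; phi t i l = phi_{(i,l)}^t;
      xt t i = \tilde x^t_{(i, ell_i^t)} *)
Definition AlgorithmRun {N B d : nat} (K : Fin B -> Blk d -> Prop)
  (gf : Fin N -> Full B d -> Full B d) (r : Fin B -> Blk d -> R)
  (ft : Fin N -> Fin B -> Blk d -> Full B d -> R)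
  (E : Fin N -> Fin N -> bool) (ell : nat -> Fin N -> Fin B)
  (a : nat -> Fin B -> Fin N -> Fin N -> R) (gamma : nat -> R)
  (x y : nat -> Fin N -> Full B d) (phi : nat -> Fin N -> Fin B -> R)
  (xt : nat -> Fin N -> Blk d) : Prop :=
  (forall i, inK K (x 0%nat i)) /\
  (forall i, y 0%nat i = gf i (x 0%nat i)) /\
  (forall i l, phi 0%nat i l = 1) /\
  (forall t i, IsArgmin (K (ell t i))
      (fun z => fhat gf ft i (ell t i) z (x t i) (y t i (ell t i)) + r (ell t i) z) (xt t i)) /\
  (forall t i l, phi (S t) i l =
      fsum N (fun j => if inNil E ell t i l j then a t l i j * phi t j l else 0)) /\
  (forall t i l, x (S t) i l =
      bsumv N (fun j => if inNil E ell t i l j then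
        bscal (a t l i j * phi t j l / phi (S t) i l)
              (badd (x t j l) (bscal (gamma t) (DeltaX ell x xt t j l)))
        else bzero d)) /\
  (forall t i l, y (S t) i l =
      bsumv N (fun j => if inNil E ell t i l j then
        bscal (a t l i j / phi (S t) i l)
              (badd (bscal (phi t j l) (y t j l))
                    (bsub (gf j (x (S t) j) l) (gf j (x t j) l)))
        else bzero d)).

(* Main.v *)
Require Import Defs.
From Stdlib Require Import Reals Lra Lia Arith Relations Classical ClassicalEpsilon FunctionalExtensionality.
Open Scope R_scope.

Lemma nsum_ext m g h : (forall k, (k < m)%nat -> g k = h k) -> nsum m g = nsum m h.
Proof. induction m; simpl; intros H; auto. rewrite IHm by (intros; apply H; lia). rewrite H by lia; auto. Qed.
Lemma nsum_plus m g h : nsum m (fun k => g k + h k) = nsum m g + nsum m h.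
Proof. induction m; simpl; [lra|]. rewrite IHm; lra. Qed.
Lemma nsum_scal m c g : nsum m (fun k => c * g k) = c * nsum m g.
Proof. induction m; simpl; [lra|]. rewrite IHm; lra. Qed.
Lemma nsum_le m g h : (forall k, (k < m)%nat -> g k <= h k) -> nsum m g <= nsum m h.
Proof. induction m; simpl; intros H; [lra|]. assert (H1:=H m ltac:(lia)). assert (nsum m g <= nsum m h) by (apply IHm; intros; apply H; lia). lra. Qed.
Lemma nsum_lt m g h : (1 <= m)%nat -> (forall k, (k < m)%nat -> g k < h k) -> nsum m g < nsum m h.
Proof. intros Hm H. destruct m; [lia|]. simpl. assert (H1:=H m ltac:(lia)). assert (nsum m g <= nsum m h) by (apply nsum_le; intros; left; apply H; lia). lra. Qed.
Lemma nsum_const m c : nsum m (fun _ => c) = INR m * c.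
Proof. induction m; simpl; [lra|]. rewrite IHm. destruct m; simpl; lra. Qed.
Lemma nsum_swap m n (F : nat -> nat -> R) : nsum m (fun i => nsum n (fun j => F i j)) = nsum n (fun j => nsum m (fun i => F i j)).
Proof. induction m; simpl. - induction n; simpl; lra. - rewrite IHm. rewrite <- nsum_plus. auto. Qed.
Lemma nsum_abs m g : Rabs (nsum m g) <= nsum m (fun k => Rabs (g k)).
Proof. induction m; simpl. rewrite Rabs_R0; lra. eapply Rle_trans. apply Rabs_triang. lra. Qed.
Lemma nsum_nonneg m g : (forall k, (k < m)%nat -> 0 <= g k) -> 0 <= nsum m g.
Proof. intros H. replace 0 with (nsum m (fun _ => 0)). apply nsum_le; auto. rewrite nsum_const; lra. Qed.
Lemma nsum_single m g k : (forall k, (k < m)%nat -> 0 <= g k) -> (k < m)%nat -> g k <= nsum m g.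
Proof. induction m; intros H Hk; [lia|]. simpl. destruct (Nat.eq_dec k m).
 - subst. assert (0 <= nsum m g) by (apply nsum_nonneg; intros; apply H; lia). lra.
 - assert (g k <= nsum m g) by (apply IHm; [intros; apply H; lia | lia]). assert (0 <= g m) by (apply H; lia). lra. Qed.

Definition fext {n} (f : Fin n -> R) (k : nat) : R :=
  match lt_dec k n with left H => f (exist _ k H) | right _ => 0 end.
Lemma fext_val {n} (f : Fin n -> R) (i : Fin n) : fext f (proj1_sig i) = f i.
Proof. unfold fext. destruct i as [k Hk]; simpl. destruct (lt_dec k n); [|lia]. f_equal. f_equal. apply le_unique. Qed.
Lemma fsum_nsum n f : fsum n f = nsum n (fext f).
Proof. reflexivity. Qed.
Lemma fsum_ext n f g : (forall i, f i = g i) -> fsum n f = fsum n g.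
Proof. intros H. unfold fsum. apply nsum_ext. intros k Hk. destruct (lt_dec k n); auto. Qed.
Lemma fsum_plus n f g : fsum n (fun i => f i + g i) = fsum n f + fsum n g.
Proof. unfold fsum. rewrite <- nsum_plus. apply nsum_ext. intros k Hk. destruct (lt_dec k n); lra. Qed.
Lemma fsum_scal n c f : fsum n (fun i => c * f i) = c * fsum n f.
Proof. unfold fsum. rewrite <- nsum_scal. apply nsum_ext. intros k Hk. destruct (lt_dec k n); lra. Qed.
Lemma fsum_minus n f g : fsum n (fun i => f i - g i) = fsum n f - fsum n g.
Proof. replace (fsum n f - fsum n g) with (fsum n f + (-1) * fsum n g) by ring.
 rewrite <- fsum_scal, <- fsum_plus. apply fsum_ext; intros; ring. Qed.
Lemma fsum_le n f g : (forall i, f i <= g i) -> fsum n f <= fsum n g.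
Proof. intros H. unfold fsum. apply nsum_le. intros k Hk. destruct (lt_dec k n); auto; lra. Qed.
Lemma fsum_nonneg n f : (forall i, 0 <= f i) -> 0 <= fsum n f.
Proof. intros H. unfold fsum. apply nsum_nonneg. intros k Hk. destruct (lt_dec k n); auto; lra. Qed.
Lemma fsum_const n c : fsum n (fun _ => c) = INR n * c.
Proof. unfold fsum. rewrite <- nsum_const. apply nsum_ext. intros k Hk. destruct (lt_dec k n); lia||lra. Qed.
Lemma fsum_zero n : fsum n (fun _ => 0) = 0.
Proof. rewrite fsum_const; ring. Qed.
Lemma fsum_abs n f : Rabs (fsum n f) <= fsum n (fun i => Rabs (f i)).
Proof. unfold fsum. eapply Rle_trans. apply nsum_abs. apply nsum_le. intros k Hk. destruct (lt_dec k n); [lra|]. rewrite Rabs_R0; lra. Qed.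
Lemma fsum_single n f i : (forall i, 0 <= f i) -> f i <= fsum n f.
Proof. intros H. rewrite <- fext_val. unfold fsum. apply nsum_single.
 intros k Hk. unfold fext. destruct (lt_dec k n); auto; lra. destruct i; simpl; auto. Qed.
Lemma fsum_swap n m (F : Fin n -> Fin m -> R) : fsum n (fun i => fsum m (fun j => F i j)) = fsum m (fun j => fsum n (fun i => F i j)).
Proof. unfold fsum.
 set (G := fun k k' => match lt_dec k n with left Hk => match lt_dec k' m with left Hk' => F (exist _ k Hk) (exist _ k' Hk') | right _ => 0 end | right _ => 0 end).
 transitivity (nsum n (fun k => nsum m (fun k' => G k k'))).
 { apply nsum_ext. intros k Hk. unfold G. destruct (lt_dec k n); [|lia]. apply nsum_ext. intros. reflexivity. }
 rewrite nsum_swap. apply nsum_ext. intros k' Hk'. destruct (lt_dec k' m); [|lia]. apply nsum_ext. intros k Hk. unfold G.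
 destruct (lt_dec k n); [|lia]. destruct (lt_dec k' m); [|lia]. repeat f_equal; apply le_unique. Qed.
Lemma fsum_lt n f g : (1 <= n)%nat -> (forall i, f i < g i) -> fsum n f < fsum n g.
Proof. intros Hn H. unfold fsum. apply nsum_lt; auto. intros k Hk. destruct (lt_dec k n); [apply H|lia]. Qed.

Fixpoint nmax (m : nat) (g : nat -> R) : R := match m with O => g O | S m' => Rmax (nmax m' g) (g m') end.
Fixpoint nmin (m : nat) (g : nat -> R) : R := match m with O => g O | S m' => Rmin (nmin m' g) (g m') end.
Lemma nmax_ge m g k : (k < m)%nat -> g k <= nmax m g.
Proof. induction m; intros Hk; [lia|]. simpl. destruct (Nat.eq_dec k m). subst; apply Rmax_r.
 eapply Rle_trans; [apply IHm; lia| apply Rmax_l]. Qed.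
Lemma nmin_le m g k : (k < m)%nat -> nmin m g <= g k.
Proof. induction m; intros Hk; [lia|]. simpl. destruct (Nat.eq_dec k m). subst; apply Rmin_r.
 eapply Rle_trans; [apply Rmin_l|apply IHm; lia]. Qed.
Lemma nmax_ex m g : (1 <= m)%nat -> exists k, (k < m)%nat /\ nmax m g = g k.
Proof. induction m; intros Hm; [lia|]. simpl. destruct m.
 - exists O. simpl. split; [lia|]. unfold Rmax; destruct Rle_dec; auto.
 - destruct (IHm ltac:(lia)) as [k [Hk E]]. unfold Rmax; destruct Rle_dec.
   exists (S m); split; auto. exists k; split; [lia|auto]. Qed.
Lemma nmin_ex m g : (1 <= m)%nat -> exists k, (k < m)%nat /\ nmin m g = g k.
Proof. induction m; intros Hm; [lia|]. simpl. destruct m.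
 - exists O. simpl. split; [lia|]. unfold Rmin; destruct Rle_dec; auto.
 - destruct (IHm ltac:(lia)) as [k [Hk E]]. unfold Rmin; destruct Rle_dec.
   exists k; split; [lia|auto]. exists (S m); split; auto. Qed.
Definition fmax {n} (f : Fin n -> R) := nmax n (fext f).
Definition fmin {n} (f : Fin n -> R) := nmin n (fext f).
Lemma fmax_ge {n} (f : Fin n -> R) i : f i <= fmax f.
Proof. rewrite <- fext_val. apply nmax_ge. destruct i; simpl; auto. Qed.
Lemma fmin_le {n} (f : Fin n -> R) i : fmin f <= f i.
Proof. rewrite <- fext_val. apply nmin_le. destruct i; simpl; auto. Qed.
Lemma fmax_ex {n} (f : Fin n -> R) : (1 <= n)%nat -> exists i, fmax f = f i.
Proof. intros Hn. destruct (nmax_ex n (fext f) Hn) as [k [Hk E]]. exists (exist _ k Hk).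
 unfold fmax; rewrite E. rewrite <- (fext_val f (exist _ k Hk)). reflexivity. Qed.
Lemma fmin_ex {n} (f : Fin n -> R) : (1 <= n)%nat -> exists i, fmin f = f i.
Proof. intros Hn. destruct (nmin_ex n (fext f) Hn) as [k [Hk E]]. exists (exist _ k Hk).
 unfold fmin; rewrite E. rewrite <- (fext_val f (exist _ k Hk)). reflexivity. Qed.
Lemma fmax_le {n} (f : Fin n -> R) c : (1 <= n)%nat -> (forall i, f i <= c) -> fmax f <= c.
Proof. intros Hn H. destruct (fmax_ex f Hn) as [i E]; rewrite E; auto. Qed.
Lemma fmin_ge {n} (f : Fin n -> R) c : (1 <= n)%nat -> (forall i, c <= f i) -> c <= fmin f.
Proof. intros Hn H. destruct (fmin_ex f Hn) as [i E]; rewrite E; auto. Qed.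
Lemma Rabs_le_inv a b : Rabs a <= b -> - b <= a <= b.
Proof. intros H. split. assert (-a <= Rabs a) by (rewrite <- Rabs_Ropp; apply Rle_abs). lra. assert (a <= Rabs a) by apply Rle_abs. lra. Qed.
Lemma pow_le_one x n : 0 <= x <= 1 -> x ^ n <= 1.
Proof. intros H. induction n; simpl; [lra|]. assert (0 <= x^n) by (apply pow_le; lra). nra. Qed.


Lemma bdot_sym {d} (u v : Blk d) : bdot u v = bdot v u.
Proof. unfold bdot. apply fsum_ext; intros; ring. Qed.
Lemma bdot_self_nonneg {d} (u : Blk d) : 0 <= bdot u u.
Proof. unfold bdot. apply fsum_nonneg; intros; nra. Qed.
Lemma bnorm_nonneg {d} (u : Blk d) : 0 <= bnorm u.
Proof. apply sqrt_pos. Qed.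
Lemma bnorm_sq {d} (u : Blk d) : bnorm u * bnorm u = bdot u u.
Proof. apply sqrt_sqrt, bdot_self_nonneg. Qed.
Lemma bdot_addl {d} (u v w : Blk d) : bdot (badd u v) w = bdot u w + bdot v w.
Proof. unfold bdot, badd. rewrite <- fsum_plus. apply fsum_ext; intros; ring. Qed.
Lemma bdot_subl {d} (u v w : Blk d) : bdot (bsub u v) w = bdot u w - bdot v w.
Proof. unfold bdot, bsub. rewrite <- fsum_minus. apply fsum_ext; intros; ring. Qed.
Lemma bdot_scall {d} c (u w : Blk d) : bdot (bscal c u) w = c * bdot u w.
Proof. unfold bdot, bscal. rewrite <- fsum_scal. apply fsum_ext; intros; ring. Qed.
Lemma bdot_addr {d} (u v w : Blk d) : bdot w (badd u v) = bdot w u + bdot w v.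
Proof. rewrite !(bdot_sym w). apply bdot_addl. Qed.
Lemma bdot_subr {d} (u v w : Blk d) : bdot w (bsub u v) = bdot w u - bdot w v.
Proof. rewrite !(bdot_sym w). apply bdot_subl. Qed.
Lemma bdot_scalr {d} c (u w : Blk d) : bdot w (bscal c u) = c * bdot w u.
Proof. rewrite !(bdot_sym w). apply bdot_scall. Qed.
Lemma bdot_zerol {d} (w : Blk d) : bdot (bzero d) w = 0.
Proof. unfold bdot, bzero. transitivity (fsum d (fun _ => 0)). apply fsum_ext; intros; ring. apply fsum_zero. Qed.

Lemma prod_sums n m (f : Fin n -> R) (g : Fin m -> R) : fsum n f * fsum m g = fsum n (fun j => fsum m (fun k => f j * g k)).
Proof. rewrite (Rmult_comm (fsum n f)), <- fsum_scal. apply fsum_ext. intros j. rewrite Rmult_comm, <- fsum_scal. apply fsum_ext; intros; ring. Qed.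
Lemma fsum2_lin n (F G H : Fin n -> Fin n -> R) :
  fsum n (fun j => fsum n (fun k => F j k + G j k - 2 * H j k)) =
  fsum n (fun j => fsum n (fun k => F j k)) + fsum n (fun j => fsum n (fun k => G j k)) - 2 * fsum n (fun j => fsum n (fun k => H j k)).
Proof. rewrite <- fsum_scal, <- fsum_plus, <- fsum_minus. apply fsum_ext. intros j.
 rewrite <- fsum_scal, <- fsum_plus, <- fsum_minus. apply fsum_ext; intros; ring. Qed.
Lemma CS_sq {d} (u v : Blk d) : bdot u v * bdot u v <= bdot u u * bdot v v.
Proof.
 assert (E : fsum d (fun j => fsum d (fun k => (u j * v k - u k * v j) ^ 2)) =
    fsum d (fun j => fsum d (fun k => (u j * u j) * (v k * v k))) + fsum d (fun j => fsum d (fun k => (u k * u k) * (v j * v j)))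
    - 2 * fsum d (fun j => fsum d (fun k => (u j * v j) * (u k * v k)))).
 { rewrite <- fsum2_lin. apply fsum_ext; intros; apply fsum_ext; intros; ring. }
 rewrite (fsum_swap d d (fun j k => u k * u k * (v j * v j))) in E.
 unfold bdot. rewrite !prod_sums. cbv beta in *.
 assert (0 <= fsum d (fun j => fsum d (fun k => (u j * v k - u k * v j) ^ 2))).
 { apply fsum_nonneg; intros; apply fsum_nonneg; intros; apply pow2_ge_0. }
 lra. Qed.

Lemma CS {d} (u v : Blk d) : Rabs (bdot u v) <= bnorm u * bnorm v.
Proof. unfold bnorm. rewrite <- sqrt_mult by apply bdot_self_nonneg.
 rewrite <- sqrt_Rsqr_abs. apply sqrt_le_1. apply Rle_0_sqr. apply Rmult_le_pos; apply bdot_self_nonneg.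
 unfold Rsqr. apply CS_sq. Qed.

Lemma sqrt_sum_le n (a : Fin n -> R) : (forall k, 0 <= a k) -> sqrt (fsum n (fun k => a k * a k)) <= fsum n a.
Proof. intros H. assert (0 <= fsum n a) by (apply fsum_nonneg; auto).
 rewrite <- (sqrt_square (fsum n a)) by auto. apply sqrt_le_1.
 apply fsum_nonneg; intros; nra. nra.
 replace (fsum n a * fsum n a) with (fsum n (fun j => a j * fsum n a)) by (rewrite <- fsum_scal; apply fsum_ext; intros; ring).
 apply fsum_le. intros j. apply Rmult_le_compat_l; auto. apply fsum_single; auto. Qed.
Lemma sqrt_single n (a : Fin n -> R) i : Rabs (a i) <= sqrt (fsum n (fun k => a k * a k)).
Proof. rewrite <- sqrt_Rsqr_abs. apply sqrt_le_1. apply Rle_0_sqr. apply fsum_nonneg; intros; nra.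
 unfold Rsqr. apply (fsum_single n (fun k => a k * a k)). intros; nra. Qed.

Lemma coord_le_bnorm {d} (u : Blk d) k : Rabs (u k) <= bnorm u.
Proof. apply sqrt_single. Qed.
Lemma bnorm_le_sum {d} (u : Blk d) : bnorm u <= fsum d (fun k => Rabs (u k)).
Proof. unfold bnorm, bdot. eapply Rle_trans; [|apply sqrt_sum_le; intros; apply Rabs_pos].
 right. f_equal. apply fsum_ext. intros. rewrite <- Rabs_mult. rewrite Rabs_right; auto. nra. Qed.
Lemma fnorm_alt {B d} (x : Full B d) : fnorm x = sqrt (fsum B (fun l => bnorm (x l) * bnorm (x l))).
Proof. unfold fnorm, fdot. f_equal. apply fsum_ext. intros; rewrite bnorm_sq; auto. Qed.
Lemma bnorm_le_fnorm {B d} (x : Full B d) l : bnorm (x l) <= fnorm x.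
Proof. rewrite fnorm_alt. rewrite <- (Rabs_right (bnorm (x l))) by (apply Rle_ge, bnorm_nonneg). apply (sqrt_single B (fun l => bnorm (x l)) l). Qed.
Lemma fnorm_le_sum {B d} (x : Full B d) : fnorm x <= fsum B (fun l => bnorm (x l)).
Proof. rewrite fnorm_alt. apply sqrt_sum_le. intros; apply bnorm_nonneg. Qed.
Lemma fnorm_nonneg {B d} (x : Full B d) : 0 <= fnorm x.
Proof. apply sqrt_pos. Qed.
Lemma fnorm_le_sum2 {B d} (x : Full B d) : fnorm x <= fsum B (fun l => fsum d (fun k => Rabs (x l k))).
Proof. eapply Rle_trans. apply fnorm_le_sum. apply fsum_le; intros; apply bnorm_le_sum. Qed.


Lemma fin_bound1 n (P : Fin n -> nat -> Prop) : (forall j, exists m, P j m) ->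
  exists M, forall j, exists m, (m <= M)%nat /\ P j m.
Proof. intros H.
 assert (forall k, exists M, forall j : Fin n, (proj1_sig j < k)%nat -> exists m, (m <= M)%nat /\ P j m).
 { induction k. - exists O. intros j Hj; lia.
   - destruct IHk as [M HM]. destruct (lt_dec k n) as [Hk|Hk].
     + destruct (H (exist _ k Hk)) as [m0 Hm0]. exists (Nat.max M m0). intros j Hj.
       destruct (Nat.eq_dec (proj1_sig j) k) as [e|e].
       * exists m0. split; [lia|]. replace j with (exist (fun k => (k < n)%nat) k Hk); auto.
         destruct j as [j' Hj']; simpl in e; subst. f_equal. apply le_unique.
       * destruct (HM j ltac:(lia)) as [m [Hm1 Hm2]]. exists m; split; [lia|auto].
     + exists M. intros j Hj. apply HM. destruct j; simpl in *; lia. }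
 destruct (H0 n) as [M HM]. exists M. intros j. apply HM. destruct j; simpl; auto. Qed.

Lemma fin_bound2 n (P : Fin n -> Fin n -> nat -> Prop) : (forall j i, exists m, P j i m) ->
  exists M, forall j i, exists m, (m <= M)%nat /\ P j i m.
Proof. intros H.
 destruct (fin_bound1 n (fun j M => forall i, exists m, (m <= M)%nat /\ P j i m)) as [M HM].
 { intros j. apply fin_bound1. apply H. }
 exists M. intros j i. destruct (HM j) as [m [Hm1 Hm2]]. destruct (Hm2 i) as [m' [H1 H2]]. exists m'; split; [lia|auto]. Qed.

Section Propag.
Variables (N T : nat) (E : Fin N -> Fin N -> bool)
 (act : nat -> Fin N -> Fin N -> Prop)
 (Hact : forall j i, E j i = true -> forall s, exists k, (k < T)%nat /\ act (s+k)%nat j i)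
 (eta : R) (Heta: 0 < eta <= 1).

Definition GoodHyps (G : Fin N -> nat -> R -> Prop) : Prop :=
  (forall i s dl dl', G i s dl -> 0 <= dl' <= dl -> G i s dl') /\
  (forall i s dl, 0 <= dl -> G i s dl -> G i (S s) (eta*dl)) /\
  (forall j i s dl, 0 <= dl -> act s j i -> G j s dl -> G i (S s) (eta*dl)).

Lemma good_self G : GoodHyps G -> forall k i s dl, 0 <= dl -> G i s dl -> G i (s+k)%nat (eta^k * dl).
Proof. intros [H1 [H2 H3]]. induction k; intros i s dl Hd Hg. simpl. replace (s+0)%nat with s by lia. rewrite Rmult_1_l; auto.
 replace (s + S k)%nat with (S (s+k)) by lia. simpl. rewrite Rmult_assoc. apply H2.
 apply Rmult_le_pos; auto. apply pow_le; lra. apply IHk; auto. Qed.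

Lemma good_edge G : GoodHyps G -> forall j i, E j i = true -> forall s dl, 0 <= dl -> G j s dl -> G i (s+T)%nat (eta^T * dl).
Proof. intros HG j i Hji s dl Hd Hg. destruct (Hact j i Hji s) as [k [Hk Ha]].
 assert (G j (s+k)%nat (eta^k*dl)) by (apply good_self; auto).
 assert (Hp: 0 <= eta^k*dl) by (apply Rmult_le_pos; auto; apply pow_le; lra).
 destruct HG as [H1 [H2 H3]].
 assert (G i (S (s+k)) (eta*(eta^k*dl))) by (apply (H3 j); auto).
 assert (G i (S (s+k) + (T - S k))%nat (eta^(T - S k) * (eta*(eta^k*dl)))).
 { apply good_self. split; auto. apply Rmult_le_pos; lra. auto. }
 replace (S (s+k) + (T - S k))%nat with (s+T)%nat in H4 by lia.
 replace (eta ^ T * dl) with (eta ^ (T - S k) * (eta * (eta ^ k * dl))); auto.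
 replace T with ((T - S k) + S k)%nat at 2 by lia. rewrite pow_add. simpl. ring. Qed.

Lemma good_path j i : clos_trans _ (fun a b => E a b = true) j i ->
  exists m, forall G, GoodHyps G -> forall s dl, 0 <= dl -> G j s dl -> G i (s + m*T)%nat (eta^(m*T) * dl).
Proof. induction 1.
 - exists 1%nat. intros G HG s dl Hd Hg. replace (1*T)%nat with T by lia. eapply good_edge; eauto.
 - destruct IHclos_trans1 as [m1 H1]. destruct IHclos_trans2 as [m2 H2]. exists (m1+m2)%nat.
   intros G HG s dl Hd Hg. assert (Hp: 0 <= eta^(m1*T)*dl) by (apply Rmult_le_pos; auto; apply pow_le; lra).
   assert (A := H2 G HG _ _ Hp (H1 G HG s dl Hd Hg)).
   replace (s + (m1 + m2) * T)%nat with (s + m1 * T + m2 * T)%nat by nia.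
   replace (eta ^ ((m1 + m2) * T) * dl) with (eta ^ (m2 * T) * (eta ^ (m1 * T) * dl)); auto.
   replace ((m1+m2)*T)%nat with (m2*T + m1*T)%nat by nia. rewrite pow_add; ring. Qed.

Lemma propagate (HE : forall i j, clos_trans _ (fun a b => E a b = true) i j) :
  exists W, forall G, GoodHyps G -> forall j i s dl, 0 <= dl -> G j s dl -> G i (s+W)%nat (eta^W * dl).
Proof.
 destruct (fin_bound2 N (fun j i m => forall G, GoodHyps G -> forall s dl, 0 <= dl -> G j s dl -> G i (s + m*T)%nat (eta^(m*T) * dl)))
  as [M HM]. { intros j i. apply good_path. apply HE. }
 exists (M*T)%nat. intros G HG j i s dl Hd Hg. destruct (HM j i) as [m [Hm Hp]].
 assert (Hq: 0 <= eta^(m*T)*dl) by (apply Rmult_le_pos; auto; apply pow_le; lra).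
 assert (A := good_self G HG ((M-m)*T) i _ _ Hq (Hp G HG s dl Hd Hg)).
 replace (s + m * T + (M - m) * T)%nat with (s + M*T)%nat in A.
 2:{ rewrite <- Nat.add_assoc, <- Nat.mul_add_distr_r. f_equal. f_equal. lia. }
 replace (eta ^ (M*T) * dl) with (eta ^ ((M - m) * T) * (eta ^ (m * T) * dl)); auto.
 rewrite <- Rmult_assoc, <- pow_add. rewrite <- Nat.mul_add_distr_r. replace (M - m + m)%nat with M by lia. auto. Qed.
End Propag.

Lemma fin_boundR_pos n (P : Fin n -> R -> Prop) : (forall j c c', P j c -> 0 < c' <= c -> P j c') ->
  (forall j, exists c, 0 < c /\ P j c) -> exists c, 0 < c /\ forall j, P j c.
Proof. intros Hm H.
 assert (forall k, exists c, 0 < c /\ forall j : Fin n, (proj1_sig j < k)%nat -> P j c).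
 { induction k. - exists 1. split; [lra|]. intros j Hj; lia.
   - destruct IHk as [c [Hc HM]]. destruct (lt_dec k n) as [Hk|Hk].
     + destruct (H (exist _ k Hk)) as [c0 [Hc0 Pc0]]. exists (Rmin c c0). split. apply Rmin_glb_lt; auto. intros j Hj.
       destruct (Nat.eq_dec (proj1_sig j) k) as [e|e].
       * replace j with (exist (fun k => (k < n)%nat) k Hk). apply Hm with c0; auto. split. apply Rmin_glb_lt; auto. apply Rmin_r.
         destruct j as [j' Hj']; simpl in e; subst. f_equal. apply le_unique.
       * apply Hm with c. apply HM; lia. split. apply Rmin_glb_lt; auto. apply Rmin_l.
     + exists c. split; auto. intros j Hj. apply HM. destruct j; simpl in *; lia. }
 destruct (H0 n) as [c [Hc HM]]. exists c. split; auto. intros j. apply HM. destruct j; simpl; auto. Qed.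

Lemma fin_boundR_up n (P : Fin n -> R -> Prop) : (forall j c c', P j c -> c <= c' -> P j c') ->
  (forall j, exists c, P j c) -> exists c, forall j, P j c.
Proof. intros Hm H.
 assert (forall k, exists c, forall j : Fin n, (proj1_sig j < k)%nat -> P j c).
 { induction k. - exists 0. intros j Hj; lia.
   - destruct IHk as [c HM]. destruct (lt_dec k n) as [Hk|Hk].
     + destruct (H (exist _ k Hk)) as [c0 Pc0]. exists (Rmax c c0). intros j Hj.
       destruct (Nat.eq_dec (proj1_sig j) k) as [e|e].
       * replace j with (exist (fun k => (k < n)%nat) k Hk). apply Hm with c0; auto. apply Rmax_r.
         destruct j as [j' Hj']; simpl in e; subst. f_equal. apply le_unique.
       * apply Hm with c. apply HM; lia. apply Rmax_l.
     + exists c. intros j Hj. apply HM. destruct j; simpl in *; lia. }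
 destruct (H0 n) as [c HM]. exists c. intros j. apply HM. destruct j; simpl; auto. Qed.


Lemma comb_le n (w a : Fin n -> R) c i0 dl : (forall j, 0 <= w j) -> fsum n w = 1 ->
  (forall j, a j <= c) -> a i0 <= c - dl -> fsum n (fun j => w j * a j) <= c - w i0 * dl.
Proof. intros Hw Hs Ha Hi.
 assert (fsum n (fun j => w j * (c - a j)) >= w i0 * (c - a i0)).
 { apply Rle_ge. apply (fsum_single n (fun j => w j * (c - a j))). intros j. apply Rmult_le_pos; auto. specialize (Ha j); lra. }
 assert (fsum n (fun j => w j * (c - a j)) = c * fsum n w - fsum n (fun j => w j * a j)).
 { rewrite <- fsum_scal, <- fsum_minus. apply fsum_ext; intros; ring. }
 rewrite Hs in H0. assert (w i0 * dl <= w i0 * (c - a i0)) by (apply Rmult_le_compat_l; auto; lra). lra. Qed.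

Lemma comb_ge n (w a : Fin n -> R) c : (forall j, 0 <= w j) -> fsum n w = 1 ->
  (forall j, c <= a j) -> c <= fsum n (fun j => w j * a j).
Proof. intros Hw Hs Ha. replace c with (fsum n (fun j => w j * c)). apply fsum_le; intros; apply Rmult_le_compat_l; auto.
 rewrite fsum_ext with (g := fun j => c * w j) by (intros; ring). rewrite fsum_scal, Hs; ring. Qed.

Lemma comb_le0 n (w a : Fin n -> R) c : (forall j, 0 <= w j) -> fsum n w = 1 ->
  (forall j, a j <= c) -> fsum n (fun j => w j * a j) <= c.
Proof. intros Hw Hs Ha. replace c with (fsum n (fun j => w j * c)). apply fsum_le; intros; apply Rmult_le_compat_l; auto.
 rewrite fsum_ext with (g := fun j => c * w j) by (intros; ring). rewrite fsum_scal, Hs; ring. Qed.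

Definition epsf (pi : nat -> R) (t s : nat) : R := nsum (s - t) (fun q => pi (t + q)%nat).
Lemma epsf_S pi t s : (t <= s)%nat -> epsf pi t (S s) = epsf pi t s + pi s.
Proof. intros H. unfold epsf. replace (S s - t)%nat with (S (s - t)) by lia. simpl. f_equal. f_equal. lia. Qed.
Lemma epsf_0 pi t : epsf pi t t = 0.
Proof. unfold epsf. rewrite Nat.sub_diag. reflexivity. Qed.

Definition spread {N} (v : Fin N -> R) := fmax v - fmin v.

Section Cons.
Variables (N T : nat) (HN : (1 <= N)%nat) (E : Fin N -> Fin N -> bool)
 (HE : forall i j, clos_trans _ (fun a b => E a b = true) i j)
 (act : nat -> Fin N -> Fin N -> Prop)
 (Hact : forall j i, E j i = true -> forall s, exists k, (k < T)%nat /\ act (s+k)%nat j i)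
 (eta : R) (Heta: 0 < eta <= 1)
 (v : nat -> Fin N -> R) (w : nat -> Fin N -> Fin N -> R) (p : nat -> Fin N -> R) (pi : nat -> R)
 (Hw0 : forall s i j, 0 <= w s i j) (Hw1 : forall s i, fsum N (fun j => w s i j) = 1)
 (Hrec : forall s i, v (S s) i = fsum N (fun j => w s i j * (v s j + p s j)))
 (Hp : forall s j, Rabs (p s j) <= pi s)
 (Hself : forall s i, eta <= w s i i) (Hedge : forall s j i, act s j i -> eta <= w s i j).

Lemma pi_nonneg s : 0 <= pi s.
Proof. assert (Hl : (0 < N)%nat) by lia. set (j0 := exist (fun k => (k < N)%nat) O Hl). assert (H := Hp s j0). assert (0 <= Rabs (p s j0)) by apply Rabs_pos. lra. Qed.

Lemma cons_upper t : forall s, (t <= s)%nat -> forall i, v s i <= fmax (v t) + epsf pi t s.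
Proof. induction s; intros Hs i.
 - replace t with O by lia. rewrite epsf_0. rewrite Rplus_0_r. apply fmax_ge.
 - destruct (Nat.eq_dec t (S s)). subst. rewrite epsf_0, Rplus_0_r. apply fmax_ge.
   rewrite epsf_S by lia. rewrite Hrec. apply comb_le0; auto. intros j. specialize (IHs ltac:(lia) j).
   specialize (Hp s j). apply Rabs_le_inv in Hp. lra. Qed.
Lemma cons_lower t : forall s, (t <= s)%nat -> forall i, fmin (v t) - epsf pi t s <= v s i.
Proof. induction s; intros Hs i.
 - replace t with O by lia. rewrite epsf_0. rewrite Rminus_0_r. apply fmin_le.
 - destruct (Nat.eq_dec t (S s)). subst. rewrite epsf_0, Rminus_0_r. apply fmin_le.
   rewrite epsf_S by lia. rewrite Hrec. apply comb_ge; auto. intros j. specialize (IHs ltac:(lia) j).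
   specialize (Hp s j). apply Rabs_le_inv in Hp. lra. Qed.

Lemma cons_step1 s : spread (v (S s)) <= spread (v s) + 2 * pi s.
Proof. unfold spread. assert (A: fmax (v (S s)) <= fmax (v s) + pi s).
 { apply fmax_le; auto. intros i. assert (H := cons_upper s (S s) ltac:(lia) i). unfold epsf in H.
   replace (S s - s)%nat with 1%nat in H by lia. simpl in H. rewrite Nat.add_0_r in H. lra. }
 assert (B: fmin (v s) - pi s <= fmin (v (S s))).
 { apply fmin_ge; auto. intros i. assert (H := cons_lower s (S s) ltac:(lia) i). unfold epsf in H.
   replace (S s - s)%nat with 1%nat in H by lia. simpl in H. rewrite Nat.add_0_r in H. lra. }
 lra. Qed.

Lemma cons_move s i : Rabs (v (S s) i - v s i) <= spread (v s) + pi s.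
Proof. unfold spread. assert (H := cons_upper s (S s) ltac:(lia) i). assert (H' := cons_lower s (S s) ltac:(lia) i).
 unfold epsf in H, H'. replace (S s - s)%nat with 1%nat in H, H' by lia. simpl in H, H'. rewrite Nat.add_0_r in H, H'.
 assert (fmin (v s) <= v s i) by apply fmin_le. assert (v s i <= fmax (v s)) by apply fmax_ge.
 apply Rabs_le. lra. Qed.

Lemma cons_window : exists W, forall t, spread (v (t+W)%nat) <= (1 - eta^W) * spread (v t) + 2 * nsum W (fun q => pi (t+q)%nat).
Proof.
 destruct (propagate N T E act Hact eta Heta HE) as [W HW]. exists W. intros t.
 set (G := fun i s dl => (t <= s)%nat /\ v s i <= fmax (v t) + epsf pi t s - dl).
 assert (HG : GoodHyps N act eta G).
 { split; [|split].
   - intros i s dl dl' [H1 H2] H3. split; auto. lra.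
   - intros i s dl Hd [H1 H2]. split; [lia|]. rewrite epsf_S by auto. rewrite Hrec.
     assert (fsum N (fun j => w s i j * (v s j + p s j)) <= (fmax (v t) + epsf pi t s + pi s) - w s i i * dl).
     { apply comb_le; auto. intros j. assert (Hu := cons_upper t s H1 j). specialize (Hp s j). apply Rabs_le_inv in Hp. lra.
       specialize (Hp s i). apply Rabs_le_inv in Hp. lra. }
     assert (eta * dl <= w s i i * dl) by (apply Rmult_le_compat_r; auto). lra.
   - intros j i s dl Hd Ha [H1 H2]. split; [lia|]. rewrite epsf_S by auto. rewrite Hrec.
     assert (fsum N (fun j' => w s i j' * (v s j' + p s j')) <= (fmax (v t) + epsf pi t s + pi s) - w s i j * dl).
     { apply comb_le; auto. intros j'. assert (Hu := cons_upper t s H1 j'). specialize (Hp s j'). apply Rabs_le_inv in Hp. lra.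
       specialize (Hp s j). apply Rabs_le_inv in Hp. lra. }
     assert (eta * dl <= w s i j * dl) by (apply Rmult_le_compat_r; auto). lra. }
 destruct (fmin_ex (v t) HN) as [j0 Hj0].
 assert (Hs0 : 0 <= fmax (v t) - fmin (v t)) by (assert (H := fmax_ge (v t) j0); lra).
 assert (Gj0 : G j0 t (fmax (v t) - fmin (v t))). { split; auto. rewrite epsf_0. lra. }
 assert (Hall : forall i, G i (t+W)%nat (eta^W * (fmax (v t) - fmin (v t)))) by (intros i; apply (HW G HG j0 i t); auto).
 assert (Heps : epsf pi t (t+W) = nsum W (fun q => pi (t+q)%nat)) by (unfold epsf; f_equal; lia).
 unfold spread. assert (fmax (v (t+W)%nat) <= fmax (v t) + epsf pi t (t+W) - eta^W * (fmax (v t) - fmin (v t))).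
 { apply fmax_le; auto. intros i. destruct (Hall i); auto. }
 assert (fmin (v t) - epsf pi t (t+W) <= fmin (v (t+W)%nat)).
 { apply fmin_ge; auto. intros i. apply cons_lower. lia. }
 rewrite Heps in *. lra. Qed.
End Cons.


Lemma cv0_iff u : Un_cv u 0 <-> forall eps, eps > 0 -> exists M, forall n, (n >= M)%nat -> Rabs (u n) < eps.
Proof. unfold Un_cv, Rdist. split; intros H eps He; destruct (H eps He) as [M HM]; exists M; intros n Hn;
 specialize (HM n Hn); rewrite Rminus_0_r in *; auto. Qed.

Lemma cv0_le a c : (forall n, Rabs (a n) <= c n) -> Un_cv c 0 -> Un_cv a 0.
Proof. rewrite !cv0_iff. intros H Hc eps He. destruct (Hc eps He) as [M HM]. exists M. intros n Hn.
 specialize (HM n Hn). specialize (H n). assert (c n <= Rabs (c n)) by apply Rle_abs. lra. Qed.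

Lemma cv0_plus a b : Un_cv a 0 -> Un_cv b 0 -> Un_cv (fun n => a n + b n) 0.
Proof. intros Ha Hb. replace 0 with (0+0) by ring. apply CV_plus; auto. Qed.
Lemma cv0_scal c a : Un_cv a 0 -> Un_cv (fun n => c * a n) 0.
Proof. intros Ha. replace 0 with (c*0) by ring. apply CV_mult; auto. intros eps He. exists O. intros. unfold Rdist. rewrite Rminus_diag, Rabs_R0; lra. Qed.
Lemma cv0_const0 : Un_cv (fun _ => 0) 0.
Proof. intros eps He. exists O. intros. unfold Rdist. rewrite Rminus_diag, Rabs_R0; lra. Qed.
Lemma cv0_nsum m (F : nat -> nat -> R) : (forall k, (k < m)%nat -> Un_cv (fun n => F k n) 0) -> Un_cv (fun n => nsum m (fun k => F k n)) 0.
Proof. induction m; intros H; simpl. apply cv0_const0. apply cv0_plus. apply IHm; intros; apply H; lia. apply H; lia. Qed.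
Lemma cv0_fsum m (F : Fin m -> nat -> R) : (forall k, Un_cv (fun n => F k n) 0) -> Un_cv (fun n => fsum m (fun k => F k n)) 0.
Proof. intros H. unfold fsum. apply (cv0_nsum m (fun k n => fext (fun i => F i n) k)). intros k Hk. unfold fext.
 destruct (lt_dec k m). apply H. apply cv0_const0. Qed.
Lemma cv0_shift a q : Un_cv a 0 -> Un_cv (fun n => a (n + q)%nat) 0.
Proof. rewrite !cv0_iff. intros H eps He. destruct (H eps He) as [M HM]. exists M. intros n Hn. apply HM. lia. Qed.
Lemma cv0_shift_sum a W : Un_cv a 0 -> Un_cv (fun t => nsum W (fun q => a (t+q)%nat)) 0.
Proof. intros H. apply (cv0_nsum W (fun q t => a (t+q)%nat)). intros; apply cv0_shift; auto. Qed.

Lemma Rabs_lt_inv a b : Rabs a < b -> - b < a < b.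
Proof. intros H. split. assert (-a <= Rabs a) by (rewrite <- Rabs_Ropp; apply Rle_abs). lra. assert (a <= Rabs a) by apply Rle_abs. lra. Qed.

Lemma gamma_to0 (g : nat -> R) : (exists s, Un_cv (fun n => sum_f_R0 (fun t => g t ^ 2) n) s) -> Un_cv g 0.
Proof. intros [s Hs]. rewrite cv0_iff. intros eps He.
 destruct (Hs (eps*eps/2)) as [M HM]. { assert (0 < eps*eps) by nra. lra. }
 exists (S M). intros n Hn. destruct n; [lia|].
 assert (A := HM (S n) ltac:(lia)). assert (B := HM n ltac:(lia)). unfold Rdist in *. assert (Hs2: sum_f_R0 (fun t => g t ^ 2) (S n) = sum_f_R0 (fun t => g t ^ 2) n + g (S n) ^ 2) by reflexivity. rewrite Hs2 in A.
 apply Rabs_lt_inv in A. apply Rabs_lt_inv in B.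
 assert (g (S n) * g (S n) < eps * eps) by (replace (g (S n) * g (S n)) with (g (S n) ^ 2) by ring; lra).
 destruct (Rcase_abs (g (S n))); [rewrite Rabs_left by auto | rewrite Rabs_right by auto]; nra. Qed.

Section SeqW.
Variables (a b : nat -> R) (rho : R) (W : nat) (Hrho : 0 <= rho < 1) (Ha : forall t, 0 <= a t)
 (Hrec : forall t, a (t+W)%nat <= rho * a t + b t).

Lemma seq_core t0 beta : 0 <= beta -> (forall t, (t >= t0)%nat -> b t <= beta) ->
  forall n q, a (t0 + q + n*W)%nat <= rho^n * a (t0+q)%nat + beta / (1 - rho).
Proof. intros Hb H. induction n; intros q.
 - simpl. replace (t0+q+0)%nat with (t0+q)%nat by lia. assert (0 <= beta/(1-rho)) by (apply Rmult_le_pos; [lra| left; apply Rinv_0_lt_compat; lra]). lra.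
 - replace (t0 + q + S n * W)%nat with ((t0+q+n*W) + W)%nat by lia.
   eapply Rle_trans. apply Hrec. specialize (H (t0+q+n*W)%nat ltac:(lia)). specialize (IHn q).
   assert (rho * a (t0 + q + n * W)%nat <= rho * (rho ^ n * a (t0 + q)%nat + beta / (1 - rho))) by (apply Rmult_le_compat_l; lra).
   simpl. assert (beta / (1 - rho) = rho * (beta/(1-rho)) + beta) by (field; lra). lra. Qed.

Lemma seq_decomp t0 beta : 0 <= beta -> (forall t, (t >= t0)%nat -> b t <= beta) -> (1 <= W)%nat ->
  forall t, (t >= t0)%nat -> exists n, ((t - t0)/W)%nat = n /\ a t <= rho^n * nsum W (fun q => a (t0+q)%nat) + beta/(1-rho).
Proof. intros Hb H HW t Ht. exists ((t-t0)/W)%nat. split; auto.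
 set (q := ((t - t0) mod W)%nat). set (n := ((t-t0)/W)%nat).
 assert (Hq : (q < W)%nat) by (apply Nat.mod_upper_bound; lia).
 assert (Et : t = (t0 + q + n * W)%nat). { assert (X := Nat.div_mod (t - t0) W ltac:(lia)). unfold q, n. nia. }
 rewrite Et. assert (X := seq_core t0 beta Hb H n q).
 assert (a (t0+q)%nat <= nsum W (fun q => a (t0+q)%nat)) by (apply (nsum_single W (fun q => a (t0+q)%nat)); auto).
 assert (0 <= rho^n) by (apply pow_le; lra).
 assert (rho ^ n * a (t0 + q)%nat <= rho ^ n * nsum W (fun q => a (t0+q)%nat)) by (apply Rmult_le_compat_l; auto). lra. Qed.

Lemma seq_bounded beta : 0 <= beta -> (forall t, b t <= beta) -> exists C, forall t, a t <= C.
Proof. intros Hbeta Hb.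
 destruct (Nat.eq_dec W 0) as [EW|EW].
 - exists (beta / (1 - rho)). intros t. specialize (Hrec t). rewrite EW, Nat.add_0_r in Hrec.
   specialize (Hb t). apply Rmult_le_reg_l with (1 - rho). lra. unfold Rdiv. field_simplify; lra.
 - exists (nsum W (fun q => a (0+q)%nat) + beta/(1-rho)). intros t.
   destruct (seq_decomp O beta Hbeta (fun t _ => Hb t) ltac:(lia) t ltac:(lia)) as [n [_ Hn]].
   assert (rho ^n <= 1) by (apply pow_le_one; lra). assert (0 <= nsum W (fun q => a (0+q)%nat)) by (apply nsum_nonneg; auto).
   assert (rho ^ n * nsum W (fun q => a (0 + q)%nat) <= 1 * nsum W (fun q => a (0 + q)%nat)) by (apply Rmult_le_compat_r; auto).
   lra. Qed.

Lemma seq_to0 : Un_cv b 0 -> Un_cv a 0.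
Proof. intros Hb. rewrite cv0_iff in *. intros eps He.
 destruct (Hb (eps*(1-rho)/2)) as [T0 HT0]. { apply Rmult_gt_0_compat; [|lra]. apply Rmult_gt_0_compat; lra. }
 assert (Hb' : forall t, (t >= T0)%nat -> b t <= eps*(1-rho)/2) by (intros t Ht; specialize (HT0 t Ht); apply Rabs_lt_inv in HT0; lra).
 assert (Hbeta : 0 <= eps*(1-rho)/2) by (apply Rmult_le_pos; [apply Rmult_le_pos|]; lra).
 destruct (Nat.eq_dec W 0) as [EW|EW].
 - exists T0. intros t Ht. specialize (Hrec t). rewrite EW, Nat.add_0_r in Hrec. specialize (Hb' t Ht).
   rewrite Rabs_right by (apply Rle_ge; auto). assert (a t * (1 - rho) <= eps*(1-rho)/2) by lra.
   assert (a t <= eps/2). { apply Rmult_le_reg_r with (1-rho). lra. lra. } lra.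
 - set (A := nsum W (fun q => a (T0+q)%nat)).
   assert (HA : 0 <= A) by (apply nsum_nonneg; auto).
   assert (Hr : Rabs rho < 1) by (rewrite Rabs_right; lra).
   destruct (pow_lt_1_zero rho Hr (eps / 2 / (A + 1))) as [n0 Hn0]. { apply Rdiv_lt_0_compat; lra. }
   exists (T0 + n0 * W)%nat. intros t Ht.
   destruct (seq_decomp T0 _ Hbeta Hb' ltac:(lia) t ltac:(lia)) as [n [En Hn]].
   assert (n >= n0)%nat. { rewrite <- En. apply Nat.div_le_lower_bound. lia. nia. }
   specialize (Hn0 n H). rewrite Rabs_right in Hn0 by (apply Rle_ge, pow_le; lra).
   assert (rho ^ n * A <= eps / 2 / (A + 1) * A) by (apply Rmult_le_compat_r; lra).
   assert (eps / 2 / (A + 1) * A < eps / 2). { unfold Rdiv. apply Rmult_lt_reg_r with (A+1). lra. field_simplify; nra. }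
   replace (eps * (1 - rho) / 2 / (1 - rho)) with (eps/2) in Hn by (field; lra).
   rewrite Rabs_right by (apply Rle_ge; auto). fold A in Hn. lra. Qed.
End SeqW.


Lemma nsum_delta n k a : (k < n)%nat -> nsum n (fun m => if Nat.eqb m k then a else 0) = a.
Proof. induction n; intros H; [lia|]. simpl. destruct (Nat.eq_dec k n).
 - subst. rewrite Nat.eqb_refl. rewrite nsum_ext with (h := fun _ => 0). rewrite nsum_const; ring.
   intros m Hm. destruct (Nat.eqb_spec m n); [lia|auto].
 - rewrite IHn by lia. destruct (Nat.eqb_spec n k); [lia|ring]. Qed.
Lemma fsum_delta n k a : (k < n)%nat -> fsum n (fun j => if Nat.eqb (proj1_sig j) k then a else 0) = a.
Proof. intros H. unfold fsum. transitivity (nsum n (fun m => if Nat.eqb m k then a else 0)); [|apply nsum_delta; auto]. apply nsum_ext. intros m Hm.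
 destruct (lt_dec m n); [|lia]. reflexivity. Qed.

Section Sub.
Variables (d : nat) (r : Blk d -> R) (Hr : bConvexFun r) (x : Blk d).
Definition pf (v : Blk d) := r (badd x v) - r x.
Lemma pf_conv a b th : 0 <= th <= 1 -> pf (badd (bscal th a) (bscal (1-th) b)) <= th * pf a + (1-th) * pf b.
Proof. intros H. unfold pf. replace (badd x (badd (bscal th a) (bscal (1 - th) b))) with (badd (bscal th (badd x a)) (bscal (1-th) (badd x b))).
 assert (Hc := Hr (badd x a) (badd x b) th H). lra.
 apply functional_extensionality; intros j. unfold badd, bscal. ring. Qed.
Definition supp_lt (k : nat) (v : Blk d) := forall j : Fin d, (k <= proj1_sig j)%nat -> v j = 0.
Definition ev (k : nat) : Blk d := fun j => if Nat.eqb (proj1_sig j) k then 1 else 0.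

Lemma sub_step k (Hk : (k < d)%nat) c : supp_lt k c -> (forall v, supp_lt k v -> bdot c v <= pf v) ->
  exists c', supp_lt (S k) c' /\ forall v, supp_lt (S k) v -> bdot c' v <= pf v.
Proof. intros Hc Hcv. set (e := ev k).
 assert (Key : forall u u' s t, supp_lt k u -> supp_lt k u' -> 0 < s -> 0 < t ->
    (bdot c u' - pf (badd u' (bscal (-s) e))) / s <= (pf (badd u (bscal t e)) - bdot c u) / t).
 { intros u u' s t Hu Hu' Hs Ht. set (th := t / (s+t)).
   assert (Hth : 0 <= th <= 1). { unfold th. split. apply Rmult_le_pos; [lra|left; apply Rinv_0_lt_compat; lra].
     apply Rmult_le_reg_r with (s+t); [lra|]. unfold Rdiv. rewrite Rmult_assoc, Rinv_l by lra. lra. }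
   assert (Eq : badd (bscal th (badd u' (bscal (-s) e))) (bscal (1-th) (badd u (bscal t e))) = badd (bscal th u') (bscal (1-th) u)).
   { apply functional_extensionality; intros j. unfold badd, bscal, th. field. lra. }
   assert (H1 := pf_conv (badd u' (bscal (-s) e)) (badd u (bscal t e)) th Hth). rewrite Eq in H1.
   assert (H2 : bdot c (badd (bscal th u') (bscal (1-th) u)) <= pf (badd (bscal th u') (bscal (1-th) u))).
   { apply Hcv. intros j Hj. unfold badd, bscal. rewrite Hu, Hu' by auto. ring. }
   rewrite bdot_addr, !bdot_scalr in H2.
   assert (Hf : th * (s + t) = t) by (unfold th; field; lra).
   apply Rmult_le_reg_r with (s*t). nra. unfold Rdiv.
   replace ((bdot c u' - pf (badd u' (bscal (- s) e))) * / s * (s * t)) with (t * (bdot c u' - pf (badd u' (bscal (- s) e)))) by (field; lra).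
   replace ((pf (badd u (bscal t e)) - bdot c u) * / t * (s * t)) with (s * (pf (badd u (bscal t e)) - bdot c u)) by (field; lra).
   assert (th * (s+t) * bdot c u' + (1-th)*(s+t) * bdot c u <= th * (s+t) * pf (badd u' (bscal (- s) e)) + (1-th)*(s+t) * pf (badd u (bscal t e))) by nra.
   replace ((1-th)*(s+t)) with s in H by (unfold th; field; lra). rewrite Hf in H. lra. }
 set (A := fun y => exists u s, supp_lt k u /\ 0 < s /\ y = (bdot c u - pf (badd u (bscal (-s) e))) / s).
 assert (HAb : bound A).
 { exists ((pf (badd (bzero d) (bscal 1 e)) - bdot c (bzero d)) / 1). intros y [u [s [Hu [Hs Hy]]]]. subst y.
   apply Key; auto. intros j Hj; reflexivity. lra. }
 assert (HAn : exists y, A y). { exists ((bdot c (bzero d) - pf (badd (bzero d) (bscal (-1) e))) / 1). exists (bzero d), 1.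
   split. intros j Hj; reflexivity. split; [lra|auto]. }
 destruct (completeness A HAb HAn) as [al [Hal1 Hal2]].
 assert (HA : forall u s, supp_lt k u -> 0 < s -> (bdot c u - pf (badd u (bscal (-s) e))) / s <= al).
 { intros u s Hu Hs. apply Hal1. exists u, s. auto. }
 assert (HB : forall u t, supp_lt k u -> 0 < t -> al <= (pf (badd u (bscal t e)) - bdot c u) / t).
 { intros u t Hu Ht. apply Hal2. intros y [u' [s [Hu' [Hs Hy]]]]. subst y. apply Key; auto. }
 set (kk := exist (fun m => (m < d)%nat) k Hk).
 exists (fun j => if Nat.eqb (proj1_sig j) k then al else c j). split.
 { intros j Hj. destruct (Nat.eqb_spec (proj1_sig j) k); [lia|]. apply Hc. lia. }
 intros v Hv. set (t := v kk). set (u := fun j => if Nat.eqb (proj1_sig j) k then 0 else v j).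
 assert (Hu : supp_lt k u). { intros j Hj. unfold u. destruct (Nat.eqb_spec (proj1_sig j) k); auto. apply Hv. lia. }
 assert (Hve : forall t', v = badd u (bscal t' e) -> True) by auto.
 assert (Ev : v = badd u (bscal t e)).
 { apply functional_extensionality; intros j. unfold badd, bscal, u, e, ev, t. destruct (Nat.eqb_spec (proj1_sig j) k).
   - replace j with kk. ring. unfold kk. destruct j as [j' Hj']; simpl in *; subst. f_equal. apply le_unique.
   - ring. }
 assert (Edot : bdot (fun j => if Nat.eqb (proj1_sig j) k then al else c j) v = bdot c u + al * t).
 { rewrite Ev, bdot_addr, bdot_scalr. f_equal.
   - unfold bdot. apply fsum_ext. intros j. unfold u. destruct (Nat.eqb_spec (proj1_sig j) k). ring. auto.
   - rewrite Rmult_comm. f_equal. unfold bdot, e, ev. transitivity (fsum d (fun j => if Nat.eqb (proj1_sig j) k then al else 0)); [|apply fsum_delta; auto]. apply fsum_ext. intros j.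
     destruct (Nat.eqb (proj1_sig j) k); ring. }
 eapply Rle_trans; [right; exact Edot|]. destruct (Rtotal_order t 0) as [Hlt|[Heq|Hgt]].
 - assert (X := HA u (-t) Hu ltac:(lra)). replace (- - t) with t in X by ring. rewrite <- Ev in X.
   apply Rmult_le_compat_r with (r := -t) in X; [|lra]. unfold Rdiv in X.
   replace ((bdot c u - pf v) * / - t * - t) with (bdot c u - pf v) in X by (field; lra). nra.
 - rewrite Heq. replace (badd u (bscal t e)) with u in Ev. rewrite Ev. rewrite Rmult_0_r, Rplus_0_r. apply Hcv; auto.
   apply functional_extensionality; intros j. unfold badd, bscal. rewrite Heq. ring.
 - assert (X := HB u t Hu Hgt). rewrite <- Ev in X.
   apply Rmult_le_compat_r with (r := t) in X; [|lra]. unfold Rdiv in X.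
   replace ((pf v - bdot c u) * / t * t) with (pf v - bdot c u) in X by (field; lra). nra. Qed.

Lemma sub_all : forall k, (k <= d)%nat -> exists c, supp_lt k c /\ forall v, supp_lt k v -> bdot c v <= pf v.
Proof. induction k; intros Hk.
 - exists (bzero d). split. intros j _; reflexivity. intros v Hv. rewrite bdot_zerol.
   replace v with (bzero d). unfold pf. replace (badd x (bzero d)) with x. lra.
   apply functional_extensionality; intros j; unfold badd, bzero; ring.
   apply functional_extensionality; intros j; unfold bzero; rewrite Hv; auto; lia.
 - destruct (IHk ltac:(lia)) as [c [Hc1 Hc2]]. apply (sub_step k ltac:(lia) c); auto. Qed.

Lemma subgrad_exists : exists g, IsSubgrad r x g.
Proof. destruct (sub_all d (le_n d)) as [c [_ Hc]]. exists c. intros z.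
 assert (X := Hc (bsub z x)). unfold pf in X. replace (badd x (bsub z x)) with z in X.
 apply Rle_ge. apply Rplus_le_reg_r with (- r x). rewrite Rplus_comm, <- Rplus_assoc. rewrite Rplus_opp_l, Rplus_0_l.
 apply X. intros j Hj. destruct j; simpl in *; lia.
 apply functional_extensionality; intros j; unfold badd, bsub; ring. Qed.
End Sub.


Section Alg.
Variables (N B d : nat) (HN : (1 <= N)%nat)
  (K : Fin B -> Blk d -> Prop)
  (gf : Fin N -> Full B d -> Full B d) (L : Fin N -> R)
  (r : Fin B -> Blk d -> R)
  (E : Fin N -> Fin N -> bool)
  (ell : nat -> Fin N -> Fin B)
  (kappa : R) (Hkappa : 0 < kappa)
  (a : nat -> Fin B -> Fin N -> Fin N -> R)
  (ft : Fin N -> Fin B -> Blk d -> Full B d -> R)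
  (gft : Fin N -> Fin B -> Blk d -> Full B d -> Blk d) (tau : Fin N -> R)
  (gamma : nat -> R)
  (x y : nat -> Fin N -> Full B d) (phi : nat -> Fin N -> Fin B -> R)
  (xt : nat -> Fin N -> Blk d).
Hypotheses
  (Kconv : forall l, bConvexSet (K l))
  (gfL : forall i x y, inK K x -> inK K y -> fnorm (fsub (gf i x) (gf i y)) <= L i * fnorm (fsub x y))
  (gfB : forall i, exists M, forall x, inK K x -> fnorm (gf i x) <= M)
  (rconv : forall l, bConvexFun (r l)) (rsub : forall l, BoundedSubgradsOn (K l) (r l))
  (HEself : forall i, E i i = true) (HEconn : forall i j, clos_trans (Fin N) (fun a b => E a b = true) i j)
  (Hell : BlockSelection ell)
  (Ha1 : forall t l i j, inEl E ell t l i j = true -> a t l i j > kappa)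
  (Ha2 : forall t l i j, inEl E ell t l i j = false -> a t l i j = 0)
  (Ha3 : forall t l j, fsum N (fun i => a t l i j) = 1)
  (Htau : forall i, 0 < tau i)
  (Hsc : forall i l, forall x, inK K x -> forall z w, K l z -> K l w ->
      ft i l z x >= ft i l w x + bdot (gft i l w x) (bsub z w) + tau i / 2 * (bnorm (bsub z w)) ^ 2)
  (Hgrad : forall i l, forall x, inK K x -> gft i l (x l) x = gf i x l)
  (Hg1 : forall t, 0 < gamma t <= 1) (Hg0 : Un_cv gamma 0)
  (Hx0 : forall i, inK K (x 0%nat i)) (Hy0 : forall i, y 0%nat i = gf i (x 0%nat i))
  (Hphi0 : forall i l, phi 0%nat i l = 1)
  (Harg : forall t i, IsArgmin (K (ell t i))
      (fun z => fhat gf ft i (ell t i) z (x t i) (y t i (ell t i)) + r (ell t i) z) (xt t i))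
  (Hphi : forall t i l, phi (S t) i l =
      fsum N (fun j => if inNil E ell t i l j then a t l i j * phi t j l else 0))
  (Hx : forall t i l, x (S t) i l =
      bsumv N (fun j => if inNil E ell t i l j then
        bscal (a t l i j * phi t j l / phi (S t) i l)
              (badd (x t j l) (bscal (gamma t) (DeltaX ell x xt t j l)))
        else bzero d))
  (Hy : forall t i l, y (S t) i l =
      bsumv N (fun j => if inNil E ell t i l j then
        bscal (a t l i j / phi (S t) i l)
              (badd (bscal (phi t j l) (y t j l))
                    (bsub (gf j (x (S t) j) l) (gf j (x t j) l)))
        else bzero d)).

Lemma a_nonneg t l i j : 0 <= a t l i j.
Proof. destruct (inEl E ell t l i j) eqn:H. left; apply Rlt_gt in Hkappa; specialize (Ha1 _ _ _ _ H); lra. rewrite Ha2; auto; lra. Qed.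
Lemma fin_eqb_refl {n} (i : Fin n) : fin_eqb i i = true.
Proof. unfold fin_eqb. apply Nat.eqb_refl. Qed.
Lemma inNil_self t i l : inNil E ell t i l i = true.
Proof. unfold inNil. rewrite fin_eqb_refl. apply Bool.orb_true_r. Qed.
Lemma inEl_self t l i : inEl E ell t l i i = true.
Proof. unfold inEl. rewrite HEself, inNil_self. auto. Qed.
Lemma a_self t l i : a t l i i > kappa.
Proof. apply Ha1, inEl_self. Qed.
Lemma a_inNil t l i j c : (if inNil E ell t i l j then a t l i j * c else 0) = a t l i j * c.
Proof. destruct (inNil E ell t i l j) eqn:H; auto. rewrite Ha2. ring. unfold inEl. rewrite H. apply Bool.andb_false_r. Qed.
Lemma kappa_lt1 : kappa < 1.
Proof. assert (Hl : (0 < N)%nat) by lia. set (j := exist (fun k => (k < N)%nat) O Hl).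
 assert (H := Ha3 O (ell O j) j). assert (H2 : a O (ell O j) j j <= fsum N (fun i => a O (ell O j) i j)).
 { apply (fsum_single N (fun i => a O (ell O j) i j)). intros; apply a_nonneg. }
 assert (H3 := a_self O (ell O j) j). lra. Qed.

Lemma phi_pos : forall t i l, 0 < phi t i l.
Proof. induction t; intros i l. rewrite Hphi0; lra. rewrite Hphi.
 assert (X : a t l i i * phi t i l <= fsum N (fun j => if inNil E ell t i l j then a t l i j * phi t j l else 0)).
 { rewrite <- (a_inNil t l i i). apply (fsum_single N (fun j => if inNil E ell t i l j then a t l i j * phi t j l else 0)).
   intros j. rewrite a_inNil. apply Rmult_le_pos. apply a_nonneg. left; apply IHt. }
 assert (0 < a t l i i * phi t i l) by (apply Rmult_lt_0_compat; [assert (H:= a_self t l i); lra| apply IHt]). lra. Qed.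

Lemma phi_sum : forall t l, fsum N (fun i => phi t i l) = INR N.
Proof. induction t; intros l. rewrite (fsum_ext N _ (fun _ => 1)) by (intros; apply Hphi0). rewrite fsum_const; ring.
 rewrite (fsum_ext N _ (fun i => fsum N (fun j => a t l i j * phi t j l))).
 2:{ intros i. rewrite Hphi. apply fsum_ext. intros j. apply a_inNil. }
 rewrite fsum_swap. rewrite <- (IHt l). apply fsum_ext. intros j.
 rewrite (fsum_ext N _ (fun i => phi t j l * a t l i j)) by (intros; ring). rewrite fsum_scal, Ha3. ring. Qed.

Lemma T_unif : exists T, (0 < T)%nat /\ forall j t l, exists tu, (tu < T)%nat /\ ell (t + tu)%nat j = l.
Proof. destruct (fin_bound1 N (fun j T => (0 < T)%nat /\ forall t l, exists tu, (tu < T)%nat /\ ell (t + tu)%nat j = l)) as [M HM].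
 { intros j. destruct (Hell j) as [T [H1 H2]]. exists T. split; auto. }
 exists M. assert (Hl : (0 < N)%nat) by lia. destruct (HM (exist _ O Hl)) as [m [Hm [Hm0 _]]]. split; [lia|].
 intros j t l. destruct (HM j) as [m' [Hm' [_ H]]]. destruct (H t l) as [tu [Ht Ht2]]. exists tu. split; [lia|auto]. Qed.

Definition act (l : Fin B) (s : nat) (j i : Fin N) : Prop := E j i = true /\ ell s j = l.
Lemma act_inEl l s j i : act l s j i -> inEl E ell s l i j = true.
Proof. intros [H1 H2]. unfold inEl, inNil. rewrite H1, H2, fin_eqb_refl. auto. Qed.

Lemma phi_ge_term t i l j : a t l i j * phi t j l <= phi (S t) i l.
Proof. rewrite Hphi. rewrite <- (a_inNil t l i j). apply (fsum_single N (fun j => if inNil E ell t i l j then a t l i j * phi t j l else 0)).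
 intros j'. rewrite a_inNil. apply Rmult_le_pos. apply a_nonneg. left; apply phi_pos. Qed.

Lemma phi_lower : exists pm, 0 < pm /\ forall l t i, pm <= phi t i l.
Proof. destruct T_unif as [T [HT HTw]].
 apply (fin_boundR_pos B (fun l pm => forall t i, pm <= phi t i l)).
 { intros l c c' H1 H2 t i. specialize (H1 t i). lra. }
 intros l.
 assert (Hact : forall j i, E j i = true -> forall s, exists k, (k < T)%nat /\ act l (s+k)%nat j i).
 { intros j i Hji s. destruct (HTw j s l) as [k [Hk Hk2]]. exists k. split; auto. split; auto. }
 assert (Hk1 : 0 < kappa <= 1) by (assert (H := kappa_lt1); lra).
 destruct (propagate N T E (act l) Hact kappa Hk1 HEconn) as [W HW].
 set (G := fun i s dl => dl <= phi s i l).
 assert (HG : GoodHyps N (act l) kappa G).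
 { split; [|split].
   - intros i s dl dl' H1 H2. unfold G in *. lra.
   - intros i s dl Hd H1. unfold G in *. assert (X := phi_ge_term s i l i). assert (Y := a_self s l i).
     assert (kappa * dl <= a s l i i * phi s i l). { apply Rmult_le_compat; lra. } lra.
   - intros j i s dl Hd Ha H1. unfold G in *. assert (X := phi_ge_term s i l j). assert (Y := Ha1 _ _ _ _ (act_inEl _ _ _ _ Ha)).
     assert (kappa * dl <= a s l i j * phi s j l). { apply Rmult_le_compat; lra. } lra. }
 exists (kappa ^ W). split. apply pow_lt; lra. intros t i.
 destruct (le_lt_dec W t) as [Hle|Hlt].
 - set (t0 := (t - W)%nat). destruct (fmax_ex (fun j => phi t0 j l) HN) as [js Hjs].
   assert (Hge : 1 <= phi t0 js l).
   { destruct (Rle_or_lt 1 (phi t0 js l)) as [H|H]; auto. exfalso.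
     assert (fsum N (fun j => phi t0 j l) < fsum N (fun _ => 1)).
     { apply fsum_lt; auto. intros j. assert (X := fmax_ge (fun j => phi t0 j l) j). simpl in X. lra. }
     rewrite phi_sum, fsum_const in H0. lra. }
   assert (X := HW G HG js i t0 1 ltac:(lra) Hge). unfold G in X. replace (t0 + W)%nat with t in X by (unfold t0; lia). lra.
 - assert (X := good_self N (act l) kappa Hk1 G HG t i O 1 ltac:(lra) ltac:(unfold G; rewrite Hphi0; lra)).
   unfold G in X. simpl in X. assert (kappa ^ W <= kappa ^ t). { replace W with (t + (W - t))%nat by lia. rewrite pow_add.
     assert (0 < kappa ^ t) by (apply pow_lt; lra). assert (kappa ^ (W-t) <= 1) by (apply pow_le_one; lra). nra. }
   lra. Qed.

Definition w (t : nat) (l : Fin B) (i j : Fin N) : R :=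
  if inNil E ell t i l j then a t l i j * phi t j l / phi (S t) i l else 0.

Lemma w_nonneg t l i j : 0 <= w t l i j.
Proof. unfold w. destruct inNil; [|lra]. unfold Rdiv. apply Rmult_le_pos. apply Rmult_le_pos. apply a_nonneg. left; apply phi_pos.
 left; apply Rinv_0_lt_compat, phi_pos. Qed.
Lemma w_sum t l i : fsum N (fun j => w t l i j) = 1.
Proof. unfold w. rewrite (fsum_ext N _ (fun j => / phi (S t) i l * (if inNil E ell t i l j then a t l i j * phi t j l else 0))).
 rewrite fsum_scal, <- Hphi. field. apply Rgt_not_eq, phi_pos.
 intros j. destruct inNil; [field; apply Rgt_not_eq, phi_pos| ring]. Qed.
Lemma phi_leN t i l : phi t i l <= INR N.
Proof. rewrite <- (phi_sum t l). apply (fsum_single N (fun i => phi t i l)). intros; left; apply phi_pos. Qed.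
Lemma w_lower pm t l i j : 0 < pm -> (forall l t i, pm <= phi t i l) -> inEl E ell t l i j = true -> kappa * pm / INR N <= w t l i j.
Proof. intros Hpm0 Hpm H. unfold w. assert (Hn : inNil E ell t i l j = true) by (unfold inEl in H; apply andb_prop in H; tauto).
 rewrite Hn. assert (X := Ha1 _ _ _ _ H). assert (Y := Hpm l t j). assert (Z := phi_leN (S t) i l). assert (P := phi_pos (S t) i l).
 assert (Q : 0 < INR N) by (apply lt_0_INR; lia).
 unfold Rdiv. apply Rle_trans with (a t l i j * phi t j l * / INR N).
 - apply Rmult_le_compat_r. left; apply Rinv_0_lt_compat; auto. apply Rmult_le_compat; lra.
 - apply Rmult_le_compat_l. apply Rmult_le_pos. apply a_nonneg. left; apply phi_pos. apply Rinv_le_contravar; auto. Qed.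

Lemma x_rec t i l k : x (S t) i l k = fsum N (fun j => w t l i j * (x t j l k + gamma t * DeltaX ell x xt t j l k)).
Proof. rewrite Hx. unfold bsumv. apply fsum_ext. intros j. unfold w. destruct inNil; unfold bscal, badd, bzero; ring. Qed.

Definition dg (t : nat) (j : Fin N) (l : Fin B) (k : Fin d) : R := gf j (x (S t) j) l k - gf j (x t j) l k.

Lemma y_rec t i l k : y (S t) i l k = fsum N (fun j => w t l i j * (y t j l k + dg t j l k / phi t j l)).
Proof. rewrite Hy. unfold bsumv. apply fsum_ext. intros j. unfold w, dg. destruct inNil; unfold bscal, badd, bsub, bzero; [|ring].
 field. split; apply Rgt_not_eq, phi_pos. Qed.

Lemma y_inv : forall t l k, fsum N (fun i => phi t i l * y t i l k) = fsum N (fun j => gf j (x t j) l k).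
Proof. induction t; intros l k. apply fsum_ext. intros i. rewrite Hphi0, Hy0. ring.
 rewrite (fsum_ext N _ (fun i => fsum N (fun j => a t l i j * (phi t j l * y t j l k + dg t j l k)))).
 2:{ intros i. rewrite Hy. unfold bsumv. rewrite <- fsum_scal. apply fsum_ext. intros j.
     rewrite <- (a_inNil t l i j). destruct inNil; unfold bscal, badd, bsub, bzero, dg; [|ring]. field. apply Rgt_not_eq, phi_pos. }
 rewrite fsum_swap. rewrite (fsum_ext N _ (fun j => (phi t j l * y t j l k + dg t j l k))).
 2:{ intros j. rewrite (fsum_ext N _ (fun i => (phi t j l * y t j l k + dg t j l k) * a t l i j)) by (intros; ring).
     rewrite fsum_scal, Ha3. ring. }
 rewrite fsum_plus, IHt. rewrite <- fsum_plus. apply fsum_ext. intros j. unfold dg. ring. Qed.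

Lemma fin_eqb_true {n} (p q : Fin n) : fin_eqb p q = true -> p = q.
Proof. unfold fin_eqb. intros H. apply Nat.eqb_eq in H. destruct p, q; simpl in *. subst. f_equal. apply le_unique. Qed.

Lemma nsum_zero_each m (W : nat -> R) : (forall q, (q < m)%nat -> 0 <= W q) -> nsum m W = 0 -> forall q, (q < m)%nat -> W q = 0.
Proof. intros H1 H2 q Hq. assert (X := nsum_single m W q H1 Hq). specialize (H1 q Hq). lra. Qed.

Lemma conv_nat (Sc : Blk d -> Prop) (HS : bConvexSet Sc) : forall m (W : nat -> R) (Z : nat -> Blk d),
  (forall q, (q < m)%nat -> 0 <= W q) -> (forall q, (q < m)%nat -> Sc (Z q)) -> 0 < nsum m W ->
  Sc (fun k => nsum m (fun q => W q * Z q k) / nsum m W).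
Proof. induction m; intros W Z H1 H2 H3. simpl in H3; lra. simpl.
 assert (Hs : 0 <= nsum m W) by (apply nsum_nonneg; intros; apply H1; lia).
 destruct (Req_dec (nsum m W) 0) as [E0|E0].
   replace (fun k => (nsum m (fun q => W q * Z q k) + W m * Z m k) / (nsum m W + W m)) with (Z m). apply H2; lia.
   apply functional_extensionality; intros k. rewrite E0. rewrite (nsum_ext m _ (fun _ => 0)).
   rewrite nsum_const. simpl in H3. rewrite E0 in H3. field. lra.
   intros q Hq. rewrite (nsum_zero_each m W) by (auto; intros; apply H1; lia). ring.
 - assert (Hpos : 0 < nsum m W) by lra. assert (IH := IHm W Z ltac:(intros; apply H1; lia) ltac:(intros; apply H2; lia) Hpos).
   set (th := nsum m W / (nsum m W + W m)). assert (Hwm : 0 <= W m) by (apply H1; lia).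
   assert (Hth : 0 <= th <= 1). { unfold th. split. apply Rmult_le_pos; [lra| left; apply Rinv_0_lt_compat; lra].
     apply Rmult_le_reg_r with (nsum m W + W m); [lra|]. unfold Rdiv. rewrite Rmult_assoc, Rinv_l by lra. lra. }
   assert (X := HS _ _ th IH (H2 m ltac:(lia)) Hth).
   match goal with |- Sc ?f => replace f with (badd (bscal th (fun k => nsum m (fun q => W q * Z q k) / nsum m W)) (bscal (1 - th) (Z m))); auto end.
   apply functional_extensionality; intros k. unfold badd, bscal, th. field. lra. Qed.
Lemma conv_fin (Sc : Blk d -> Prop) (HS : bConvexSet Sc) n (wt : Fin n -> R) (z : Fin n -> Blk d) :
  (forall j, 0 <= wt j) -> fsum n wt = 1 -> (forall j, Sc (z j)) -> Sc (fun k => fsum n (fun j => wt j * z j k)).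
Proof. intros H1 H2 H3.
 destruct n as [|n']. { unfold fsum in H2; simpl in H2; lra. }
 set (j0 := exist (fun k => (k < S n')%nat) O (Nat.lt_0_succ n')).
 set (Z := fun q => match lt_dec q (S n') with left H => z (exist _ q H) | right _ => z j0 end).
 assert (X := conv_nat Sc HS (S n') (fext wt) Z).
 replace (fun k => fsum (S n') (fun j => wt j * z j k)) with (fun k => nsum (S n') (fun q => fext wt q * Z q k) / nsum (S n') (fext wt)).
 apply X. intros q Hq. unfold fext. destruct lt_dec; auto; lra. intros q Hq. unfold Z. destruct lt_dec; auto.
 rewrite <- fsum_nsum, H2; lra.
 apply functional_extensionality; intros k. rewrite <- fsum_nsum, H2. rewrite Rdiv_1_r. unfold fsum. apply nsum_ext.
 intros q Hq. unfold fext, Z. destruct lt_dec; [auto|lia]. Qed.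

Lemma x_inK : forall t i, inK K (x t i).
Proof. induction t; intros i l. apply Hx0.
 replace (x (S t) i l) with (fun k => fsum N (fun j => w t l i j * badd (x t j l) (bscal (gamma t) (DeltaX ell x xt t j l)) k)).
 - apply conv_fin; auto. apply w_nonneg. apply w_sum. intros j. unfold DeltaX. destruct (fin_eqb l (ell t j)) eqn:El.
   + apply fin_eqb_true in El. subst l. replace (badd (x t j (ell t j)) (bscal (gamma t) (bsub (xt t j) (x t j (ell t j)))))
       with (badd (bscal (gamma t) (xt t j)) (bscal (1 - gamma t) (x t j (ell t j)))).
     apply Kconv. apply (proj1 (Harg t j)). apply IHt. specialize (Hg1 t); lra.
     apply functional_extensionality; intros k; unfold badd, bscal, bsub; ring.
   + replace (badd (x t j l) (bscal (gamma t) (bzero d))) with (x t j l). apply IHt.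
     apply functional_extensionality; intros k; unfold badd, bscal, bzero; ring.
 - apply functional_extensionality; intros k. rewrite x_rec. apply fsum_ext; intros j. unfold badd, bscal. ring. Qed.

Lemma spread_nonneg (v : Fin N -> R) : 0 <= spread v.
Proof. unfold spread. assert (Hl : (0 < N)%nat) by lia. set (j := exist (fun k => (k < N)%nat) O Hl).
 assert (A := fmax_ge v j). assert (B' := fmin_le v j). lra. Qed.

Lemma cons_wrap l (v : nat -> Fin N -> R) p pi :
  (forall s i, v (S s) i = fsum N (fun j => w s l i j * (v s j + p s j))) -> (forall s j, Rabs (p s j) <= pi s) ->
  exists W rho, 0 <= rho < 1 /\ forall t, spread (v (t+W)%nat) <= rho * spread (v t) + 2 * nsum W (fun q => pi (t+q)%nat).
Proof. intros Hrec Hp. destruct phi_lower as [pm [Hpm Hpm2]]. destruct T_unif as [T [HT HTw]].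
 assert (Hact : forall j i, E j i = true -> forall s, exists k, (k < T)%nat /\ act l (s+k)%nat j i).
 { intros j i Hji s. destruct (HTw j s l) as [k [Hk Hk2]]. exists k. split; auto. split; auto. }
 set (eta := kappa * pm / INR N).
 assert (HNr : 1 <= INR N) by (apply (le_INR 1); auto).
 assert (Heta : 0 < eta <= 1).
 { assert (H1 := kappa_lt1). assert (Hl : (0 < N)%nat) by lia. assert (H2 : pm <= 1) by (rewrite <- (Hphi0 (exist (fun k => (k < N)%nat) O Hl) l); apply Hpm2).
   unfold eta. split. apply Rmult_lt_0_compat. nra. apply Rinv_0_lt_compat; lra.
   apply Rmult_le_reg_r with (INR N); [lra|]. unfold Rdiv. rewrite Rmult_assoc, Rinv_l by lra. nra. }
 destruct (cons_window N T HN E HEconn (act l) Hact eta Heta v (fun s i j => w s l i j) p pi) as [W HW].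
 - intros; apply w_nonneg.
 - intros; apply w_sum.
 - auto.
 - auto.
 - intros s i. apply w_lower; auto. apply inEl_self.
 - intros s j i Ha. apply w_lower; auto. apply act_inEl; auto.
 - exists W, (1 - eta ^ W). split. assert (0 < eta ^ W) by (apply pow_lt; lra). assert (eta ^ W <= 1) by (apply pow_le_one; lra). lra.
   auto. Qed.

Lemma cons_conv l (v : nat -> Fin N -> R) p pi :
  (forall s i, v (S s) i = fsum N (fun j => w s l i j * (v s j + p s j))) -> (forall s j, Rabs (p s j) <= pi s) ->
  Un_cv pi 0 -> Un_cv (fun t => spread (v t)) 0.
Proof. intros Hrec Hp Hpi. destruct (cons_wrap l v p pi Hrec Hp) as [W [rho [Hrho HW]]].
 apply (seq_to0 (fun t => spread (v t)) (fun t => 2 * nsum W (fun q => pi (t+q)%nat)) rho W Hrho).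
 intros; apply spread_nonneg. auto. apply cv0_scal, cv0_shift_sum; auto. Qed.

Lemma cons_bdd l (v : nat -> Fin N -> R) p pi beta :
  (forall s i, v (S s) i = fsum N (fun j => w s l i j * (v s j + p s j))) -> (forall s j, Rabs (p s j) <= pi s) ->
  0 <= beta -> (forall s, pi s <= beta) -> exists C, forall t, spread (v t) <= C.
Proof. intros Hrec Hp Hb Hpi. destruct (cons_wrap l v p pi Hrec Hp) as [W [rho [Hrho HW]]].
 apply (seq_bounded (fun t => spread (v t)) (fun t => 2 * nsum W (fun q => pi (t+q)%nat)) rho W Hrho) with (beta := 2 * (INR W * beta)).
 intros; apply spread_nonneg. auto. assert (0 <= INR W) by apply pos_INR. nra.
 intros t. apply Rmult_le_compat_l; [lra|]. rewrite <- nsum_const. apply nsum_le. intros; auto. Qed.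

Lemma G0_ex : exists G0, forall j z, inK K z -> fnorm (gf j z) <= G0.
Proof. apply (fin_boundR_up N (fun j G0 => forall z, inK K z -> fnorm (gf j z) <= G0)).
 intros j c c' H1 H2 z Hz. specialize (H1 z Hz). lra. auto. Qed.
Lemma coord_le_fnorm (X : Full B d) l k : Rabs (X l k) <= fnorm X.
Proof. eapply Rle_trans. apply coord_le_bnorm. apply bnorm_le_fnorm. Qed.

Lemma spread_diff (v : Fin N -> R) i j : Rabs (v i - v j) <= spread v.
Proof. unfold spread. assert (A := fmax_ge v i). assert (B1 := fmin_le v i). assert (C := fmax_ge v j). assert (D := fmin_le v j).
 apply Rabs_le. lra. Qed.

Lemma y_near_avg t i l k : Rabs (y t i l k - / INR N * fsum N (fun j => gf j (x t j) l k)) <= spread (fun i => y t i l k).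
Proof. assert (HNr : 0 < INR N) by (apply lt_0_INR; lia).
 rewrite <- y_inv. replace (y t i l k - / INR N * fsum N (fun i0 => phi t i0 l * y t i0 l k))
   with (/ INR N * fsum N (fun j => phi t j l * (y t i l k - y t j l k))).
 2:{ rewrite (fsum_ext N _ (fun j => y t i l k * phi t j l - phi t j l * y t j l k)) by (intros; ring).
     rewrite fsum_minus, fsum_scal, phi_sum. field. lra. }
 rewrite Rabs_mult, Rabs_right by (left; apply Rinv_0_lt_compat; auto).
 apply Rmult_le_reg_l with (INR N); auto. rewrite <- Rmult_assoc, Rinv_r, Rmult_1_l by lra.
 eapply Rle_trans. apply fsum_abs. rewrite <- (phi_sum t l), Rmult_comm, <- fsum_scal.
 apply fsum_le. intros j. rewrite Rabs_mult, Rabs_right by (left; apply phi_pos).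
 rewrite Rmult_comm. apply Rmult_le_compat_r. left; apply phi_pos. apply (spread_diff (fun i => y t i l k)). Qed.

Lemma y_bounded : exists Yb, forall l t i, bnorm (y t i l) <= Yb.
Proof. destruct G0_ex as [G0 HG0]. destruct phi_lower as [pm [Hpm Hpm2]].
 assert (HG0p : 0 <= G0). { assert (Hl : (0 < N)%nat) by lia. set (j := exist (fun k => (k < N)%nat) O Hl).
   specialize (HG0 j (x O j) (x_inK O j)). assert (X := fnorm_nonneg (gf j (x O j))). lra. }
 apply (fin_boundR_up B (fun l Yb => forall t i, bnorm (y t i l) <= Yb)). { intros l c c' H1 H2 t i; specialize (H1 t i); lra. }
 intros l.
 assert (Hk : exists C, forall k t i, Rabs (y t i l k) <= C).
 { apply (fin_boundR_up d (fun k C => forall t i, Rabs (y t i l k) <= C)). { intros k c c' H1 H2 t i; specialize (H1 t i); lra. }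
   intros k.
   destruct (cons_bdd l (fun t i => y t i l k) (fun s j => dg s j l k / phi s j l) (fun _ => 2 * G0 / pm) (2 * G0 / pm)) as [C HC].
   - intros s i. apply y_rec.
   - intros s j. unfold Rdiv. rewrite Rabs_mult. rewrite (Rabs_right (/ phi s j l)) by (left; apply Rinv_0_lt_compat, phi_pos).
     apply Rmult_le_compat. apply Rabs_pos. left; apply Rinv_0_lt_compat, phi_pos.
     unfold dg. eapply Rle_trans. apply Rabs_triang. rewrite Rabs_Ropp.
     assert (A := coord_le_fnorm (gf j (x (S s) j)) l k). assert (B1 := coord_le_fnorm (gf j (x s j)) l k).
     assert (P1 := HG0 j _ (x_inK (S s) j)). assert (P2 := HG0 j _ (x_inK s j)). lra.
     apply Rinv_le_contravar; auto.
   - apply Rmult_le_pos. lra. left; apply Rinv_0_lt_compat; auto.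
   - intros; lra.
   - exists (G0 + C). intros t i. assert (X := y_near_avg t i l k). specialize (HC t).
     assert (Rabs (/ INR N * fsum N (fun j => gf j (x t j) l k)) <= G0).
     { assert (HNr : 0 < INR N) by (apply lt_0_INR; lia). rewrite Rabs_mult, Rabs_right by (left; apply Rinv_0_lt_compat; auto).
       apply Rmult_le_reg_l with (INR N); auto. rewrite <- Rmult_assoc, Rinv_r, Rmult_1_l by lra.
       eapply Rle_trans. apply fsum_abs. rewrite <- fsum_const. apply fsum_le. intros j.
       eapply Rle_trans. apply coord_le_fnorm. apply HG0. apply x_inK. }
     assert (Y := Rabs_triang (y t i l k - / INR N * fsum N (fun j => gf j (x t j) l k)) (/ INR N * fsum N (fun j => gf j (x t j) l k))).
     replace (y t i l k - / INR N * fsum N (fun j => gf j (x t j) l k) + / INR N * fsum N (fun j => gf j (x t j) l k)) with (y t i l k) in Y by ring.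
     lra. }
 destruct Hk as [C HC]. exists (INR d * C). intros t i. eapply Rle_trans. apply bnorm_le_sum. rewrite <- fsum_const. apply fsum_le. auto. Qed.

Lemma Msub_ex : exists Ms, forall l z g, K l z -> IsSubgrad (r l) z g -> bnorm g <= Ms.
Proof. apply (fin_boundR_up B (fun l Ms => forall z g, K l z -> IsSubgrad (r l) z g -> bnorm g <= Ms)).
 intros l c c' H1 H2 z g Hz Hg. specialize (H1 z g Hz Hg). lra. intros l. apply rsub. Qed.

Lemma delta_bound : exists Db, 0 <= Db /\ forall t j, bnorm (bsub (xt t j) (x t j (ell t j))) <= Db.
Proof. destruct y_bounded as [Yb HYb]. destruct Msub_ex as [Ms HMs].
 assert (Hl : (0 < N)%nat) by lia. set (j0 := exist (fun k => (k < N)%nat) O Hl).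
 assert (HYb0 : 0 <= Yb) by (assert (X := HYb (ell O j0) O j0); assert (Y := bnorm_nonneg (y O j0 (ell O j0))); lra).
 assert (HMs0 : 0 <= Ms). { destruct (subgrad_exists d (r (ell O j0)) (rconv _) (x O j0 (ell O j0))) as [g Hg].
   assert (X := HMs _ _ _ (x_inK O j0 (ell O j0)) Hg). assert (Y := bnorm_nonneg g). lra. }
 set (Cst := INR N * Yb + Ms). assert (HC0 : 0 <= Cst) by (unfold Cst; assert (0 <= INR N) by apply pos_INR; nra).
 destruct (fin_boundR_up N (fun j c => 2 * Cst / tau j <= c)) as [Tb HTb]. { intros j c c' H1 H2; lra. } { intros j. exists (2 * Cst / tau j). lra. }
 exists (Rmax Tb 0). split. apply Rmax_r. intros t j.
 set (l := ell t j). set (X := x t j). set (u := X l). set (z := xt t j). set (D := bsub z u).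
 destruct (Harg t j) as [Hz Hmin]. fold l X z in Hz, Hmin.
 assert (Hu : K l u) by apply x_inK.
 specialize (Hmin u Hu). unfold fhat in Hmin.
 assert (E0 : bdot (bsub (bscal (INR N) (y t j l)) (gf j X l)) (bsub u (X l)) = 0) by (unfold u; rewrite bdot_subr; ring).
 rewrite E0 in Hmin.
 assert (Hs := Hsc j l X (x_inK t j) z u Hz Hu). replace (gft j l u X) with (gf j X l) in Hs by (unfold u; symmetry; apply Hgrad, x_inK). fold D in Hs.
 destruct (subgrad_exists d (r l) (rconv l) u) as [sg Hsg]. assert (Hsgb := HMs _ _ _ Hu Hsg).
 specialize (Hsg z). fold D in Hsg.
 assert (Key : tau j / 2 * (bnorm D * bnorm D) <= - (INR N * bdot (y t j l) D + bdot sg D)).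
 { fold u in Hmin. fold D in Hmin. rewrite bdot_subl, bdot_scall in Hmin. simpl in Hs. lra. }
 assert (Hcs1 := CS (y t j l) D). assert (Hcs2 := CS sg D). apply Rabs_le_inv in Hcs1. apply Rabs_le_inv in Hcs2.
 assert (HyD : bnorm (y t j l) * bnorm D <= Yb * bnorm D) by (apply Rmult_le_compat_r; [apply bnorm_nonneg| apply HYb]).
 assert (HsD : bnorm sg * bnorm D <= Ms * bnorm D) by (apply Rmult_le_compat_r; [apply bnorm_nonneg| auto]).
 assert (HN0 : 0 <= INR N) by apply pos_INR.
 assert (Key2 : tau j / 2 * (bnorm D * bnorm D) <= Cst * bnorm D) by (unfold Cst; nra).
 assert (Ht := Htau j). assert (HD0 := bnorm_nonneg D).
 assert (bnorm D <= 2 * Cst / tau j).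
 { destruct (Req_dec (bnorm D) 0) as [e|e]. rewrite e. apply Rmult_le_pos; [lra|left; apply Rinv_0_lt_compat; auto].
   apply Rmult_le_reg_l with (tau j / 2 * bnorm D). apply Rmult_lt_0_compat; lra.
   replace (tau j / 2 * bnorm D * (2 * Cst / tau j)) with (Cst * bnorm D) by (field; lra). nra. }
 specialize (HTb j). assert (Y := Rmax_l Tb 0). lra. Qed.

Definition Fobj i l X c u q := ft i l q X + bdot c (bsub q u) + r l q.

Lemma bnorm_sq2 (v : Blk d) : bnorm v ^ 2 = bdot v v.
Proof. simpl. rewrite Rmult_1_r. apply bnorm_sq. Qed.

Lemma strong_min_th i l X c u zs q th : inK K X -> K l zs -> K l q -> 0 < th <= 1 ->
  (forall q', K l q' -> Fobj i l X c u zs <= Fobj i l X c u q') ->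
  tau i / 2 * (1 - th) * bdot (bsub q zs) (bsub q zs) <= Fobj i l X c u q - Fobj i l X c u zs.
Proof. intros HX Hzs Hq Hth Hmin. set (D := bsub q zs). set (zt := badd (bscal th q) (bscal (1-th) zs)).
 assert (Hzt : K l zt) by (apply Kconv; auto; lra).
 assert (H1 := Hmin zt Hzt). unfold Fobj in *.
 assert (E1 : bsub zs zt = bscal (- th) D) by (apply functional_extensionality; intros k; unfold D, zt, bsub, badd, bscal; ring).
 assert (E2 : bsub q zt = bscal (1 - th) D) by (apply functional_extensionality; intros k; unfold D, zt, bsub, badd, bscal; ring).
 assert (S1 := Hsc i l X HX zs zt Hzs Hzt). assert (S2 := Hsc i l X HX q zt Hq Hzt).
 rewrite E1, bnorm_sq2, bdot_scall, bdot_scalr, bdot_scalr in S1. rewrite E2, bnorm_sq2, bdot_scall, bdot_scalr, bdot_scalr in S2.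
 assert (Er : r l zt <= th * r l q + (1 - th) * r l zs) by (apply rconv; lra).
 assert (El : bdot c (bsub zt u) = th * bdot c (bsub q u) + (1 - th) * bdot c (bsub zs u)).
 { replace (bsub zt u) with (badd (bscal th (bsub q u)) (bscal (1-th) (bsub zs u))).
   rewrite bdot_addr, !bdot_scalr. ring. apply functional_extensionality; intros k; unfold zt, bsub, badd, bscal; ring. }
 set (g := gft i l zt X) in *. set (DD := bdot D D) in *.
 assert (Hft : ft i l zt X <= th * ft i l q X + (1 - th) * ft i l zs X - tau i / 2 * th * (1 - th) * DD).
 { assert (A1 : (1 - th) * ft i l zs X >= (1 - th) * (ft i l zt X + - th * bdot g D + tau i / 2 * (- th * (- th * DD)))).
   { apply Rle_ge. apply Rmult_le_compat_l; lra. }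
   assert (A2 : th * ft i l q X >= th * (ft i l zt X + (1 - th) * bdot g D + tau i / 2 * ((1 - th) * ((1 - th) * DD)))).
   { apply Rle_ge. apply Rmult_le_compat_l; lra. }
   nra. }
 assert (th * (Fobj i l X c u q - Fobj i l X c u zs) >= th * (tau i / 2 * (1 - th) * DD)).
 { unfold Fobj. nra. }
 unfold Fobj in H. apply Rge_le in H. apply Rmult_le_reg_l in H; lra. Qed.

Lemma strong_min i l X c u zs q : inK K X -> K l zs -> K l q ->
  (forall q', K l q' -> Fobj i l X c u zs <= Fobj i l X c u q') ->
  tau i / 2 * bdot (bsub q zs) (bsub q zs) <= Fobj i l X c u q - Fobj i l X c u zs.
Proof. intros HX Hzs Hq Hmin. set (DD := bdot (bsub q zs) (bsub q zs)). set (G := Fobj i l X c u q - Fobj i l X c u zs).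
 assert (HDD : 0 <= DD) by apply bdot_self_nonneg. assert (Ht := Htau i).
 destruct (Rle_or_lt (tau i / 2 * DD) G) as [H|H]; auto. exfalso.
 set (gap := tau i / 2 * DD - G). assert (Hg : 0 < gap) by (unfold gap; lra).
 assert (HP : 0 < tau i / 2 * DD) by (assert (X1 := strong_min_th i l X c u zs q 1 HX Hzs Hq ltac:(lra) Hmin); fold DD G in X1; lra).
 set (th := Rmin 1 (gap / (tau i * DD))).
 assert (Hth : 0 < th <= 1). { unfold th. split. apply Rmin_glb_lt. lra. apply Rdiv_lt_0_compat; auto. nra. apply Rmin_l. }
 assert (X1 := strong_min_th i l X c u zs q th HX Hzs Hq Hth Hmin). fold DD G in X1.
 assert (th * (tau i * DD) <= gap). { assert (th <= gap / (tau i * DD)) by apply Rmin_r.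
   apply Rmult_le_compat_r with (r := tau i * DD) in H0; [|nra]. unfold Rdiv in H0. rewrite Rmult_assoc, Rinv_l in H0 by nra. lra. }
 unfold gap in H0. nra. Qed.

Lemma two_min i l X c1 c2 u z1 z2 : inK K X -> K l z1 -> K l z2 ->
  (forall q', K l q' -> Fobj i l X c1 u z1 <= Fobj i l X c1 u q') ->
  (forall q', K l q' -> Fobj i l X c2 u z2 <= Fobj i l X c2 u q') ->
  bnorm (bsub z1 z2) <= bnorm (bsub c1 c2) / tau i.
Proof. intros HX H1 H2 M1 M2. assert (A := strong_min i l X c1 u z1 z2 HX H1 H2 M1).
 assert (B' := strong_min i l X c2 u z2 z1 HX H2 H1 M2). unfold Fobj in A, B'.
 assert (Elin : bdot c1 (bsub z2 u) - bdot c1 (bsub z1 u) + (bdot c2 (bsub z1 u) - bdot c2 (bsub z2 u)) = bdot (bsub c1 c2) (bsub z2 z1)).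
 { rewrite !bdot_subr, !bdot_subl. ring. }
 assert (Es : bdot (bsub z1 z2) (bsub z1 z2) = bdot (bsub z2 z1) (bsub z2 z1)).
 { unfold bdot. apply fsum_ext. intros; unfold bsub; ring. }
 assert (Key : tau i * bdot (bsub z2 z1) (bsub z2 z1) <= bdot (bsub c1 c2) (bsub z2 z1)) by (rewrite Es in B'; lra).
 assert (Hn : bnorm (bsub z2 z1) = bnorm (bsub z1 z2)) by (unfold bnorm; rewrite Es; auto).
 rewrite <- bnorm_sq in Key. assert (C := CS (bsub c1 c2) (bsub z2 z1)). apply Rabs_le_inv in C.
 rewrite Hn in *. assert (Ht := Htau i). assert (P := bnorm_nonneg (bsub z1 z2)). assert (P2 := bnorm_nonneg (bsub c1 c2)).
 destruct (Req_dec (bnorm (bsub z1 z2)) 0) as [e|e]. rewrite e. apply Rmult_le_pos; [auto| left; apply Rinv_0_lt_compat; auto].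
 apply Rmult_le_reg_l with (tau i * bnorm (bsub z1 z2)). apply Rmult_lt_0_compat; lra.
 replace (tau i * bnorm (bsub z1 z2) * (bnorm (bsub c1 c2) / tau i)) with (bnorm (bsub c1 c2) * bnorm (bsub z1 z2)) by (field; lra).
 nra. Qed.

Lemma deltaX_bound : exists Db, 0 <= Db /\ forall s j l k, Rabs (DeltaX ell x xt s j l k) <= Db.
Proof. destruct delta_bound as [Db [HDb HD]]. exists Db. split; auto. intros s j l k. unfold DeltaX.
 destruct (fin_eqb l (ell s j)) eqn:El. apply fin_eqb_true in El. subst l. eapply Rle_trans. apply coord_le_bnorm. apply HD.
 unfold bzero. rewrite Rabs_R0. auto. Qed.

Lemma x_spread0 l k : Un_cv (fun t => spread (fun i => x t i l k)) 0.
Proof. destruct deltaX_bound as [Db [HDb HD]].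
 apply (cons_conv l (fun t i => x t i l k) (fun s j => gamma s * DeltaX ell x xt s j l k) (fun s => Db * gamma s)).
 - intros s i. apply x_rec.
 - intros s j. rewrite Rabs_mult. rewrite Rabs_right by (left; apply Hg1). rewrite Rmult_comm. apply Rmult_le_compat_r. left; apply Hg1. auto.
 - apply cv0_scal; auto. Qed.

Lemma x_move0 j l k : Un_cv (fun t => x (S t) j l k - x t j l k) 0.
Proof. destruct deltaX_bound as [Db [HDb HD]].
 apply cv0_le with (c := fun t => spread (fun i => x t i l k) + Db * gamma t).
 - intros t. apply (cons_move N HN (fun t i => x t i l k) (fun s i j => w s l i j) (fun s j => gamma s * DeltaX ell x xt s j l k) (fun s => Db * gamma s)).
   intros; apply w_nonneg. intros; apply w_sum. intros; apply x_rec.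
   intros s j'. rewrite Rabs_mult. rewrite Rabs_right by (left; apply Hg1). rewrite Rmult_comm. apply Rmult_le_compat_r. left; apply Hg1. auto.
 - apply cv0_plus. apply x_spread0. apply cv0_scal; auto. Qed.

Lemma fsub_coord (X Y : Full B d) l k : fsub X Y l k = X l k - Y l k.
Proof. reflexivity. Qed.

Lemma dx0 j : Un_cv (fun t => fnorm (fsub (x (S t) j) (x t j))) 0.
Proof. apply cv0_le with (c := fun t => fsum B (fun l => fsum d (fun k => Rabs (x (S t) j l k - x t j l k)))).
 - intros t. rewrite Rabs_right by (apply Rle_ge, fnorm_nonneg). apply fnorm_le_sum2.
 - apply (cv0_fsum B (fun l t => fsum d (fun k => Rabs (x (S t) j l k - x t j l k)))). intros l.
   apply (cv0_fsum d (fun k t => Rabs (x (S t) j l k - x t j l k))). intros k.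
   apply cv0_le with (c := fun t => Rabs (x (S t) j l k - x t j l k)). intros; rewrite Rabs_Rabsolu; lra.
   assert (H := x_move0 j l k). rewrite cv0_iff in *. intros eps He. destruct (H eps He) as [M HM]. exists M. intros n Hn.
   rewrite Rabs_Rabsolu. auto. Qed.

Lemma dg0 j l k : Un_cv (fun t => dg t j l k) 0.
Proof. apply cv0_le with (c := fun t => Rabs (L j) * fnorm (fsub (x (S t) j) (x t j))).
 - intros t. unfold dg. eapply Rle_trans. rewrite <- fsub_coord. apply coord_le_fnorm.
   eapply Rle_trans. apply gfL; apply x_inK. apply Rmult_le_compat_r. apply fnorm_nonneg. apply Rle_abs.
 - apply cv0_scal, dx0. Qed.

Lemma y_spread0 l k : Un_cv (fun t => spread (fun i => y t i l k)) 0.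
Proof. destruct phi_lower as [pm [Hpm Hpm2]].
 apply (cons_conv l (fun t i => y t i l k) (fun s j => dg s j l k / phi s j l) (fun s => / pm * fsum N (fun j => Rabs (dg s j l k)))).
 - intros s i. apply y_rec.
 - intros s j. unfold Rdiv. rewrite Rabs_mult, (Rabs_right (/ phi s j l)) by (left; apply Rinv_0_lt_compat, phi_pos).
   rewrite Rmult_comm. apply Rmult_le_compat. left; apply Rinv_0_lt_compat, phi_pos. apply Rabs_pos.
   apply Rinv_le_contravar; auto. apply (fsum_single N (fun j => Rabs (dg s j l k))). intros; apply Rabs_pos.
 - apply cv0_scal. apply (cv0_fsum N (fun j t => Rabs (dg t j l k))). intros j.
   apply cv0_le with (c := fun t => Rabs (dg t j l k)). intros; rewrite Rabs_Rabsolu; lra.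
   assert (H := dg0 j l k). rewrite cv0_iff in *. intros eps He. destruct (H eps He) as [M HM]. exists M. intros n Hn.
   rewrite Rabs_Rabsolu. auto. Qed.

Definition SX t := fsum B (fun l' => fsum d (fun k' => spread (fun i => x t i l' k'))).

Lemma coord_diff_bound t i j : fnorm (fsub (x t i) (x t j)) <= SX t.
Proof. eapply Rle_trans. apply fnorm_le_sum2. apply fsum_le; intros l'. apply fsum_le; intros k'.
 rewrite fsub_coord. apply (spread_diff (fun i => x t i l' k')). Qed.

Lemma final_coord t i l k : Rabs (fsum N (fun j => gf j (x t i) l k) - INR N * y t i l k)
   <= fsum N (fun j => Rabs (L j)) * SX t + INR N * spread (fun i => y t i l k).
Proof. assert (HNr : 0 < INR N) by (apply lt_0_INR; lia).
 replace (fsum N (fun j => gf j (x t i) l k) - INR N * y t i l k) with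
   (fsum N (fun j => gf j (x t i) l k - gf j (x t j) l k) + INR N * (/ INR N * fsum N (fun j => gf j (x t j) l k) - y t i l k)).
 2:{ rewrite fsum_minus. field. lra. }
 eapply Rle_trans. apply Rabs_triang. apply Rplus_le_compat.
 - eapply Rle_trans. apply fsum_abs. rewrite Rmult_comm, <- fsum_scal. apply fsum_le. intros j.
   rewrite <- fsub_coord. eapply Rle_trans. apply coord_le_fnorm. eapply Rle_trans. apply gfL; apply x_inK.
   eapply Rle_trans. apply Rmult_le_compat_r. apply fnorm_nonneg. apply Rle_abs. rewrite Rmult_comm.
   apply Rmult_le_compat_r. apply Rabs_pos. apply coord_diff_bound.
 - rewrite Rabs_mult, Rabs_right by lra. apply Rmult_le_compat_l. lra. rewrite <- Rabs_Ropp.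
   replace (- (/ INR N * fsum N (fun j => gf j (x t j) l k) - y t i l k)) with (y t i l k - / INR N * fsum N (fun j => gf j (x t j) l k)) by ring.
   apply y_near_avg. Qed.

Lemma final i xhat : (forall t, IsArgmin (K (ell t i)) (BRobj gf ft r i (ell t i) (x t i)) (xhat t)) ->
  Un_cv (fun t => bnorm (bsub (xhat t) (xt t i))) 0.
Proof. intros Hxh. assert (HNr : 0 < INR N) by (apply lt_0_INR; lia). assert (Ht := Htau i).
 set (LS := fsum N (fun j => Rabs (L j))).
 apply cv0_le with (c := fun t => / tau i * fsum B (fun l => fsum d (fun k => LS * SX t + INR N * spread (fun i => y t i l k)))).
 - intros t. rewrite Rabs_right by (apply Rle_ge, bnorm_nonneg).
   set (l := ell t i). set (X := x t i).
   set (c1 := bsub (bscal (INR N) (bscal (/ INR N) (bsumv N (fun j => gf j X l)))) (gf i X l)).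
   set (c2 := bsub (bscal (INR N) (y t i l)) (gf i X l)).
   assert (A := two_min i l X c1 c2 (X l) (xhat t) (xt t i) (x_inK t i) (proj1 (Hxh t)) (proj1 (Harg t i)) (proj2 (Hxh t)) (proj2 (Harg t i))).
   eapply Rle_trans. apply A. unfold Rdiv. rewrite Rmult_comm. apply Rmult_le_compat_l. left; apply Rinv_0_lt_compat; auto.
   eapply Rle_trans. apply bnorm_le_sum.
   eapply Rle_trans. 2:{ apply (fsum_single B (fun l => fsum d (fun k => LS * SX t + INR N * spread (fun i => y t i l k))) l).
     intros l'. apply fsum_nonneg. intros k. apply Rplus_le_le_0_compat. apply Rmult_le_pos. unfold LS; apply fsum_nonneg; intros; apply Rabs_pos.
     unfold SX. apply fsum_nonneg; intros; apply fsum_nonneg; intros; apply spread_nonneg.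
     apply Rmult_le_pos. lra. apply spread_nonneg. }
   apply fsum_le. intros k. unfold c1, c2, bsub, bscal, bsumv, X.
   replace (INR N * (/ INR N * fsum N (fun j => gf j (x t i) l k)) - gf i (x t i) l k - (INR N * y t i l k - gf i (x t i) l k))
     with (fsum N (fun j => gf j (x t i) l k) - INR N * y t i l k) by (field; lra).
   apply final_coord.
 - apply cv0_scal. apply (cv0_fsum B (fun l t => fsum d (fun k => LS * SX t + INR N * spread (fun i => y t i l k)))). intros l.
   apply (cv0_fsum d (fun k t => LS * SX t + INR N * spread (fun i => y t i l k))). intros k.
   apply cv0_plus. apply cv0_scal. unfold SX. apply (cv0_fsum B (fun l' t => fsum d (fun k' => spread (fun i => x t i l' k')))). intros l'.
   apply (cv0_fsum d (fun k' t => spread (fun i => x t i l' k'))). intros k'. apply x_spread0.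
   apply cv0_scal. apply y_spread0. Qed.
End Alg.

Theorem mainTheorem9
  (N B d : nat) (HN : (1 <= N)%nat) (HB : (1 <= B)%nat) (Hd : (1 <= d)%nat)
  (K : Fin B -> Blk d -> Prop)
  (f : Fin N -> Full B d -> R) (gf : Fin N -> Full B d -> Full B d) (L : Fin N -> R)
  (r : Fin B -> Blk d -> R)
  (HP : ProblemAssumptions K f gf L r)
  (E : Fin N -> Fin N -> bool) (HE : NetworkAssumptions E)
  (ell : nat -> Fin N -> Fin B) (Hell : BlockSelection ell)
  (kappa : R) (Hkappa : 0 < kappa)
  (a : nat -> Fin B -> Fin N -> Fin N -> R) (Ha : WeightAssumptions E ell kappa a)
  (ft : Fin N -> Fin B -> Blk d -> Full B d -> R)
  (gft : Fin N -> Fin B -> Blk d -> Full B d -> Blk d) (tau : Fin N -> R)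
  (Hsur : SurrogateAssumptions K gf ft gft tau)
  (gamma : nat -> R) (Hgamma : StepSizes gamma)
  (x y : nat -> Fin N -> Full B d) (phi : nat -> Fin N -> Fin B -> R)
  (xt : nat -> Fin N -> Blk d)
  (Hrun : AlgorithmRun K gf r ft E ell a gamma x y phi xt) :
  forall (i : Fin N) (xhat : nat -> Blk d),
    (forall t, IsArgmin (K (ell t i)) (BRobj gf ft r i (ell t i) (x t i)) (xhat t)) ->
    Un_cv (fun t => bnorm (bsub (xhat t) (xt t i))) 0.
Proof.
 destruct HP as [HK [Hf [Hr _]]]. destruct HE as [HEs HEc].
 destruct Ha as [Ha1 [Ha2 Ha3]]. destruct Hsur as [Ht [_ [Hsc [Hgr _]]]].
 destruct Hgamma as [Hg1 [_ [_ Hg2]]].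
 destruct Hrun as [Hx0 [Hy0 [Hp0 [Harg [Hphi [Hx Hy]]]]]].
 intros i xhat Hxh.
 apply (final N B d HN K gf L r E ell kappa Hkappa a ft gft tau gamma x y phi xt); auto.
 - intros l; apply HK.
 - intros j; apply Hf.
 - intros j; apply Hf.
 - intros l; apply Hr.
 - intros l; apply Hr.
 - apply gamma_to0; auto.
Qed.
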